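(* In the network setting of the context, suppose there is at most one $i\in\mathcal I$ with $|\mathcal J(i)|>1$. Then for every $m\ge1$ there exist positive constants $\delta,\hat\kappa$ and a positive definite matrix $Q\in\mathbb R^{I\times I}$ such that the function $\mathcal V\in C^2(\mathbb R^I)$ with $\mathcal V(x)=(x^{\mathsf T}Qx)^{m/2}$ for $|x|\ge1$ satisfies $$\mathcal L^u\mathcal V(x)\le\hat\kappa-|x|^m\qquad\forall x\in\mathcal K_{\delta,+}^c,\ \forall u\in\mathbb U,$$ where $\mathcal K_{\delta,+}=\{x\in\mathbb R^I:e\cdot x>\delta|x|\}$.
   Context: Network setting. $\mathcal I=\{1,\dots,I\}$, $\mathcal J=\{1,\dots,J\}$; $\mathcal G$ a bipartite tree on $\mathcal I\cup\mathcal J$ with edges $i\sim j$; $\mathcal J(i)=\{j:i\sim j\}$. Constants $\lambda_i>0$, $\gamma_i\ge0$, $\ell_i\in\mathbb R$; $\mu_{ij}>0$ if $i\sim j$, $\mu_{ij}=0$ otherwise. $e$ = all-ones vector, $a^\pm$ positive/negative parts. For $e\cdot\alpha=e\cdot\beta$, $G(\alpha,\beta)$ is the unique $\psi\in\mathbb R^{I\times J}$ with row sums $\alpha_i$, column sums $\beta_j$, and $\psi_{ij}=0$ for $i\not\sim j$. $\mathbb U=\{u=(u^c,u^s)\in\mathbb R^I_+\times\mathbb R^J_+:e\cdot u^c=e\cdot u^s=1\}$; $\hat G[u](x)=G(x-(e\cdot x)^+u^c,-(e\cdot x)^-u^s)$; drift $b_i(x,u)=-\sum_{j\in\mathcal J(i)}\mu_{ij}\hat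 G_{ij}[u](x)-\gamma_i(e\cdot x)^+u^c_i+\ell_i$. Controlled generator $\mathcal L^u f(x)=\sum_i\lambda_i\partial_{ii}f(x)+b(x,u)\cdot\nabla f(x)$. *)

(* Defs.v *)
From mathcomp Require Import all_boot.
From Stdlib Require Import Reals ClassicalEpsilon.

Set Implicit Arguments.
Unset Strict Implicit.
Unset Printing Implicit Defensive.

Local Open Scope R_scope.

Definition vec (n : nat) := 'I_n -> R.

Definition sumR (n : nat) (f : 'I_n -> R) : R := \big[Rplus/0]_(i < n) f i.

Definition esum (n : nat) (x : vec n) : R := sumR x.

Definition vnorm (n : nat) (x : vec n) : R := sqrt (sumR (fun i => x i * x i)).

Definition pospart (a : R) : R := Rmax a 0.
Definition negpart (a : R) : R := Rmax (- a) 0.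

Definition rpow (r m : R) : R := if Rle_dec r 0 then 0 else Rpower r m.

Definition bvert (nI nJ : nat) : finType := ('I_nI + 'I_nJ)%type.

Definition badj (nI nJ : nat) (edge : 'I_nI -> 'I_nJ -> bool) : rel (bvert nI nJ) :=
  fun v w => match v, w with
             | inl i, inr j => edge i j
             | inr j, inl i => edge i j
             | _, _ => false
             end.

Definition graph_connected (T : finType) (adj : rel T) : Prop :=
  forall v w : T, connect adj v w.

Definition graph_acyclic (T : finType) (adj : rel T) : Prop :=
  ~ (exists (v : T) (p : seq T),
        (2 <= size p)%nat /\ uniq (v :: p) /\ path adj v p /\ adj (last v p) v).

Definition bipartite_tree (nI nJ : nat) (edge : 'I_nI -> 'I_nJ -> bool) : Prop :=
  graph_connected (badj edge) /\ graph_acyclic (badj edge).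

Definition mat (nI nJ : nat) := 'I_nI -> 'I_nJ -> R.

Definition is_G (nI nJ : nat) (edge : 'I_nI -> 'I_nJ -> bool)
  (alpha : vec nI) (beta : vec nJ) (psi : mat nI nJ) : Prop :=
  (forall i, sumR (fun j => psi i j) = alpha i) /\
  (forall j, sumR (fun i => psi i j) = beta j) /\
  (forall i j, edge i j = false -> psi i j = 0).

(* G(alpha,beta): the (unique, for a tree and e.alpha = e.beta) psi with
   the prescribed row/column sums supported on the edges. *)
Definition Gmap (nI nJ : nat) (edge : 'I_nI -> 'I_nJ -> bool)
  (alpha : vec nI) (beta : vec nJ) : mat nI nJ :=
  epsilon (inhabits (fun _ _ => 0)) (is_G edge alpha beta).

Definition in_U (nI nJ : nat) (uc : vec nI) (us : vec nJ) : Prop :=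
  (forall i, 0 <= uc i) /\ (forall j, 0 <= us j) /\ esum uc = 1 /\ esum us = 1.

Definition Ghat (nI nJ : nat) (edge : 'I_nI -> 'I_nJ -> bool)
  (uc : vec nI) (us : vec nJ) (x : vec nI) : mat nI nJ :=
  Gmap edge (fun i => x i - pospart (esum x) * uc i)
            (fun j => - (negpart (esum x) * us j)).

Definition drift (nI nJ : nat) (edge : 'I_nI -> 'I_nJ -> bool)
  (mu : mat nI nJ) (gam ell : vec nI) (x : vec nI) (uc : vec nI) (us : vec nJ)
  (i : 'I_nI) : R :=
  - (\big[Rplus/0]_(j < nJ | edge i j) (mu i j * Ghat edge uc us x i j))
  - gam i * pospart (esum x) * uc i + ell i.

Definition shift (n : nat) (x : vec n) (i : 'I_n) (t : R) : vec n :=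
  fun k => if k == i then x k + t else x k.

Definition continuous_vec (n : nat) (g : vec n -> R) : Prop :=
  forall (x : vec n) (eps : R), 0 < eps -> exists delta, 0 < delta /\
    forall y : vec n, (forall k, Rabs (y k - x k) < delta) -> Rabs (g y - g x) < eps.

Definition is_C2 (n : nat) (f : vec n -> R) (Df : 'I_n -> vec n -> R)
  (D2f : 'I_n -> 'I_n -> vec n -> R) : Prop :=
  (forall i x, derivable_pt_lim (fun t => f (shift x i t)) 0 (Df i x)) /\
  (forall i k x, derivable_pt_lim (fun t => Df i (shift x k t)) 0 (D2f i k x)) /\
  continuous_vec f /\ (forall i, continuous_vec (Df i)) /\
  (forall i k, continuous_vec (D2f i k)).

Definition gen (nI nJ : nat) (edge : 'I_nI -> 'I_nJ -> bool)
  (lam gam ell : vec nI) (mu : mat nI nJ)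
  (Df : 'I_nI -> vec nI -> R) (D2f : 'I_nI -> 'I_nI -> vec nI -> R)
  (uc : vec nI) (us : vec nJ) (x : vec nI) : R :=
  sumR (fun i => lam i * D2f i i x) +
  sumR (fun i => drift edge mu gam ell x uc us i * Df i x).

Definition qform (n : nat) (Q : 'I_n -> 'I_n -> R) (x : vec n) : R :=
  sumR (fun i => sumR (fun k => x i * Q i k * x k)).

Definition pos_def (n : nat) (Q : 'I_n -> 'I_n -> R) : Prop :=
  (forall i k, Q i k = Q k i) /\
  (forall x : vec n, (exists i, x i <> 0) -> 0 < qform Q x).

Definition deg (nI nJ : nat) (edge : 'I_nI -> 'I_nJ -> bool) (i : 'I_nI) : nat :=
  #|[pred j : 'I_nJ | edge i j]|.

(* Main.v *)
Require Import Defs.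
From HB Require Import structures.
From mathcomp Require Import all_boot.
From Stdlib Require Import Reals.
From Stdlib Require Import Lra Psatz ClassicalEpsilon FunctionalExtensionality Classical.
Local Open Scope R_scope.

HB.instance Definition _ := Monoid.isComLaw.Build R 0 Rplus (fun a b c => esym (Rplus_assoc a b c)) Rplus_comm Rplus_0_l.

Lemma sumR_ext n (f g : 'I_n -> R) : (forall i, f i = g i) -> sumR f = sumR g.
Proof. by move=> H; apply: eq_bigr => i _. Qed.

Lemma sumR_plus n (f g : 'I_n -> R) : sumR (fun i => f i + g i) = sumR f + sumR g.
Proof. by rewrite /sumR big_split. Qed.

Lemma sumR_scal n c (f : 'I_n -> R) : sumR (fun i => c * f i) = c * sumR f.
Proof.
rewrite /sumR; elim/big_rec2: _ => [|i y1 y2 _ ->]; first by rewrite Rmult_0_r.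
by rewrite Rmult_plus_distr_l.
Qed.

Lemma sumR_le n (f g : 'I_n -> R) : (forall i, f i <= g i) -> sumR f <= sumR g.
Proof.
move=> H; rewrite /sumR; elim/big_ind2: _ => //; first lra.
by move=> *; apply Rplus_le_compat.
Qed.

Lemma sumR_single n (f : 'I_n -> R) j0 : (forall j, j <> j0 -> f j = 0) -> sumR f = f j0.
Proof.
move=> H; rewrite /sumR (bigD1 j0) //= big1 ?Rplus_0_r // => j /eqP Hj; exact: H.
Qed.

Lemma sumR_ge_single n (f : 'I_n -> R) j0 : (forall j, 0 <= f j) -> f j0 <= sumR f.
Proof.
move=> H; rewrite /sumR (bigD1 j0) //=.
have : 0 <= \big[Rplus/0]_(i < n | i != j0) f i.
  elim/big_ind: _ => //; [lra | move=> *; lra].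
move=> HH; rewrite -{1}(Rplus_0_r (f j0)); apply: Rplus_le_compat_l; exact: HH.
Qed.

Lemma sumR_exch n k (F : 'I_n -> 'I_k -> R) :
  sumR (fun i => sumR (fun j => F i j)) = sumR (fun j => sumR (fun i => F i j)).
Proof. by rewrite /sumR exchange_big. Qed.

Lemma sumR_abs n (f : 'I_n -> R) : Rabs (sumR f) <= sumR (fun i => Rabs (f i)).
Proof.
rewrite /sumR; elim/big_ind2: _ => [|a b c d H1 H2|i _].
- rewrite Rabs_R0; lra.
- eapply Rle_trans; first exact: Rabs_triang. lra.
- lra.
Qed.

Lemma sumR_recr n (f : 'I_n.+1 -> R) :
  sumR f = sumR (fun i : 'I_n => f (widen_ord (leqnSn n) i)) + f ord_max.
Proof. by rewrite /sumR big_ord_recr. Qed.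

Lemma sumR_0 (f : 'I_0 -> R) : sumR f = 0.
Proof. by rewrite /sumR big_ord0. Qed.

Lemma sumR_const_le n (f : 'I_n -> R) c : (forall i, f i <= c) -> sumR f <= INR n * c.
Proof.
elim: n f => [|n IH] f H; first by rewrite sumR_0 /=; lra.
rewrite sumR_recr S_INR.
have := IH (fun i => f (widen_ord (leqnSn n) i)) (fun i => H _).
move=> h. have := H ord_max. lra.
Qed.

Lemma sumR_nonneg n (f : 'I_n -> R) : (forall i, 0 <= f i) -> 0 <= sumR f.
Proof.
move=> H; rewrite /sumR; elim/big_ind: _ => //; [lra | move=> *; lra].
Qed.

Lemma sumR_CS n (w : 'I_n -> R) : sumR w * sumR w <= INR n * sumR (fun i => w i * w i).
Proof.
elim: n w => [|n IH] w; first by rewrite !sumR_0 /=; lra.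
rewrite !sumR_recr S_INR.
set S := sumR (fun i : 'I_n => w (widen_ord (leqnSn n) i)).
set T := sumR (fun i : 'I_n => w (widen_ord (leqnSn n) i) * w (widen_ord (leqnSn n) i)).
have h := IH (fun i => w (widen_ord (leqnSn n) i)). rewrite -/S -/T in h.
set z := w ord_max.
have hT : 0 <= T by apply: sumR_nonneg => i; nra.
clearbody S T z.
have hn := pos_INR n.
destruct (Req_dec (INR n) 0) as [h0|h0].
- have -> : S = 0 by nra. rewrite h0; nra.
- have hn' : 0 < INR n by lra.
  have : 2 * S * z * INR n <= S * S + INR n * INR n * z * z.
    have := Rle_0_sqr (S - INR n * z). rewrite /Rsqr. lra.
  move=> h2.
  have h4 : INR n * (S * S) <= INR n * (INR n * T) by apply Rmult_le_compat_l; lra.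
  have : (S + z) * (S + z) * INR n <= (INR n + 1) * (T + z * z) * INR n.
    have e1 : (S + z) * (S + z) * INR n = INR n * (S * S) + 2 * S * z * INR n + INR n * z * z by ring.
    have e2 : (INR n + 1) * (T + z * z) * INR n = INR n * (INR n * T) + INR n * T + INR n * INR n * z * z + INR n * z * z by ring.
    rewrite e1 e2. lra.
  move=> h3. apply: (Rmult_le_reg_r (INR n)) => //.
Qed.

Lemma sumR_opp n (f : 'I_n -> R) : sumR (fun i => - f i) = - sumR f.
Proof.
have := sumR_scal _ (-1) f.
have -> : sumR (fun i => -1 * f i) = sumR (fun i => - f i) by apply: sumR_ext => i; ring.
move=> ->; ring.
Qed.

Lemma sumR_sub n (f g : 'I_n -> R) : sumR (fun i => f i - g i) = sumR f - sumR g.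
Proof. rewrite /Rminus sumR_plus sumR_opp //. Qed.

Lemma sumR_drop n (f : 'I_n -> R) i0 : sumR f = f i0 + sumR (fun k => if k == i0 then 0 else f k).
Proof.
rewrite /sumR (bigD1 i0) //= [in RHS](bigD1 i0) //= eqxx Rplus_0_l.
congr (_ + _); apply: eq_bigr => i /negbTE ->. done.
Qed.

Lemma sumR_zero n : sumR (fun _ : 'I_n => 0) = 0.
Proof. by rewrite /sumR big1. Qed.

Lemma dext f g x l : (forall y, f y = g y) -> derivable_pt_lim g x l -> derivable_pt_lim f x l.
Proof. by move=> H; have -> : f = g by apply: functional_extensionality. Qed.

Lemma dplus f g x a b : derivable_pt_lim f x a -> derivable_pt_lim g x b ->
  derivable_pt_lim (fun y => f y + g y) x (a + b).
Proof. exact: derivable_pt_lim_plus. Qed.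

Lemma dmult f g x a b : derivable_pt_lim f x a -> derivable_pt_lim g x b ->
  derivable_pt_lim (fun y => f y * g y) x (a * g x + f x * b).
Proof. exact: derivable_pt_lim_mult. Qed.

Lemma dconst c x : derivable_pt_lim (fun _ => c) x 0.
Proof. exact: derivable_pt_lim_const. Qed.

Lemma did x : derivable_pt_lim (fun y => y) x 1.
Proof. exact: derivable_pt_lim_id. Qed.

Lemma dcomp f g x a b : derivable_pt_lim g x a -> derivable_pt_lim f (g x) b ->
  derivable_pt_lim (fun y => f (g y)) x (b * a).
Proof. move=> h1 h2; exact: (derivable_pt_lim_comp g f x a b h1 h2). Qed.

Lemma dpow n x : derivable_pt_lim (fun y => y ^ n) x (INR n * x ^ n.-1).
Proof. exact: derivable_pt_lim_pow. Qed.

Lemma dglue f f1 f2 x l r : 0 < r ->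
  (forall h, Rabs h < r -> f (x + h) = f1 (x + h) \/ f (x + h) = f2 (x + h)) ->
  f x = f1 x -> f x = f2 x ->
  derivable_pt_lim f1 x l -> derivable_pt_lim f2 x l -> derivable_pt_lim f x l.
Proof.
move=> hr H e1 e2 d1 d2 eps he.
case: (d1 eps he) => [[d1' hd1] H1]; case: (d2 eps he) => [[d2' hd2] H2].
have hd : 0 < Rmin r (Rmin d1' d2') by repeat apply Rmin_pos.
exists (mkposreal _ hd) => h hn hh /=.
simpl in hh.
have hr' : Rabs h < r by apply: Rlt_le_trans hh (Rmin_l _ _).
have h1 : Rabs h < d1' by apply: Rlt_le_trans hh _; apply: Rle_trans (Rmin_r _ _) (Rmin_l _ _).
have h2 : Rabs h < d2' by apply: Rlt_le_trans hh _; apply: Rle_trans (Rmin_r _ _) (Rmin_r _ _).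
case: (H h hr') => ->.
- rewrite e1; exact: H1.
- rewrite e2; exact: H2.
Qed.

Lemma pp_pos z : 0 < z -> pospart z = z.
Proof. rewrite /pospart => h; apply: Rmax_left; lra. Qed.
Lemma pp_neg z : z <= 0 -> pospart z = 0.
Proof. rewrite /pospart => h; apply: Rmax_right; lra. Qed.
Lemma pp_ge0 z : 0 <= pospart z.
Proof. rewrite /pospart; apply: Rmax_r. Qed.
Lemma pp_ge z : z <= pospart z.
Proof. rewrite /pospart; apply: Rmax_l. Qed.

Lemma dpp_pow k z : (2 <= k)%nat ->
  derivable_pt_lim (fun z => pospart z ^ k) z (INR k * pospart z ^ k.-1).
Proof.
move=> hk.
have z0 : 0 ^ k.-1 = 0 by apply: pow_i; apply/ltP; move: hk; case: (k) => [|[|k']].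
have z1 : 0 ^ k = 0 by apply: pow_i; apply/ltP; move: hk; case: (k) => [|[|k']].
case: (Rlt_le_dec 0 z) => hz.
- apply: (dglue _ (fun y => y ^ k) (fun y => y ^ k) _ _ (z)) => //.
  + move=> h hh; left; rewrite pp_pos //; move: (Rabs_def2 _ _ hh); lra.
  + by rewrite pp_pos.
  + by rewrite pp_pos.
  + rewrite pp_pos //; exact: dpow.
  + rewrite pp_pos //; exact: dpow.
case: (Req_dec z 0) => hz0.
- subst z. rewrite pp_neg; last lra. rewrite z0 Rmult_0_r.
  apply: (dglue _ (fun y => y ^ k) (fun _ => 0) _ _ (1)); try lra.
  + move=> h _; case: (Rlt_le_dec 0 (0 + h)) => hh.
    * by left; rewrite pp_pos.
    * by right; rewrite pp_neg // z1.
  + by rewrite pp_neg ?z1 //; lra.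
  + by rewrite pp_neg ?z1 //; lra.
  + have := dpow k 0; by rewrite z0 Rmult_0_r.
  + exact: dconst.
- rewrite pp_neg; last lra. rewrite z0 Rmult_0_r.
  apply: (dglue _ (fun _ => 0) (fun _ => 0) _ _ (- z)); try lra.
  + move=> h hh; left; rewrite pp_neg ?z1 //; move: (Rabs_def2 _ _ hh); lra.
  + by rewrite pp_neg ?z1 //; lra.
  + by rewrite pp_neg ?z1 //; lra.
  + exact: dconst.
  + exact: dconst.
Qed.

Lemma dval f x l l' : derivable_pt_lim f x l -> l = l' -> derivable_pt_lim f x l'.
Proof. by move=> h <-. Qed.

Lemma Rdiv_le_0_compat a b : 0 <= a -> 0 < b -> 0 <= a / b.
Proof. move=> ha hb; apply: Rmult_le_pos => //; apply: Rlt_le; exact: Rinv_0_lt_compat. Qed.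

Definition Hf c r := r + pospart (c - r) ^ 3 / (3 * (c * c)).
Definition H1f c r := 1 - pospart (c - r) ^ 2 / (c * c).
Definition H2f c r := 2 * pospart (c - r) / (c * c).

Lemma dminus_c c r : derivable_pt_lim (fun y => c - y) r (-1).
Proof.
eapply dval.
  apply: (derivable_pt_lim_minus (fun _ => c) (fun y => y)); [exact: dconst | exact: did].
ring.
Qed.

Lemma dHf c r : 0 < c -> derivable_pt_lim (Hf c) r (H1f c r).
Proof.
move=> hc; rewrite /Hf /H1f.
have h3 := dcomp (fun z => pospart z ^ 3) (fun y => c - y) r _ _ (dminus_c c r) (dpp_pow 3 (c - r) isT).
have h4 := derivable_pt_lim_div_scal _ _ _ (3 * (c * c)) h3.
have := dplus _ _ _ _ _ (did r) h4.
move=> h; eapply dval; first exact: h.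
have -> : INR 3 = 3 by simpl; ring.
simpl.
field; lra.
Qed.

Lemma dH1f c r : 0 < c -> derivable_pt_lim (H1f c) r (H2f c r).
Proof.
move=> hc; rewrite /H1f /H2f.
have h3 := dcomp (fun z => pospart z ^ 2) (fun y => c - y) r _ _ (dminus_c c r) (dpp_pow 2 (c - r) isT).
have h4 := derivable_pt_lim_div_scal _ _ _ (c * c) h3.
have := derivable_pt_lim_minus _ _ _ _ _ (dconst 1 r) h4.
move=> h; eapply dval; first exact: h.
have -> : INR 2 = 2 by simpl; ring.
simpl. field; lra.
Qed.

Lemma Hf_ge c r : 0 < c -> c / 3 <= Hf c r.
Proof.
move=> hc; rewrite /Hf.
case: (Rle_lt_dec c r) => h.
- rewrite pp_neg; last lra. simpl. have : 0 / (3 * (c * c)) = 0 by field; lra. lra.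
- rewrite pp_pos; last lra.
  set z := c - r.
  have hz : 0 < z by rewrite /z; lra.
  have -> : r = c - z by rewrite /z; ring.
  have key : 0 <= (z - c) * (z - c) * (z + 2 * c) by apply: Rmult_le_pos; [apply: Rle_0_sqr | lra].
  have e : c - z + z ^ 3 / (3 * (c * c)) - c / 3 = (z - c) * (z - c) * (z + 2 * c) / (3 * (c * c)) by field; lra.
  have : 0 <= (z - c) * (z - c) * (z + 2 * c) / (3 * (c * c)).
    apply: Rdiv_le_0_compat => //; nra.
  lra.
Qed.

Lemma Hf_pos c r : 0 < c -> 0 < Hf c r.
Proof. move=> hc; have := Hf_ge c r hc; lra. Qed.

Lemma Hf_big c r : c <= r -> Hf c r = r.
Proof. move=> h; rewrite /Hf pp_neg; last lra. simpl. rewrite /Rdiv; ring. Qed.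
Lemma H1f_big c r : c <= r -> H1f c r = 1.
Proof. move=> h; rewrite /H1f pp_neg; last lra. simpl. rewrite /Rdiv; ring. Qed.
Lemma H2f_big c r : c <= r -> H2f c r = 0.
Proof. move=> h; rewrite /H2f pp_neg; last lra. rewrite /Rdiv; ring. Qed.

Lemma Hf_ge_r c r : 0 < c -> 0 <= r -> r <= Hf c r.
Proof.
move=> hc hr; rewrite /Hf.
have := pp_ge0 (c - r) => h.
have : 0 <= pospart (c - r) ^ 3 / (3 * (c * c)).
  apply: Rdiv_le_0_compat; [apply: pow_le => // | nra].
lra.
Qed.

Lemma H1f_bnd c r : 0 < c -> 0 <= r -> 0 <= H1f c r <= 1.
Proof.
move=> hc hr; case: (Rle_lt_dec c r) => h; first by rewrite H1f_big //; lra.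
rewrite /H1f pp_pos; last lra. simpl.
have h1 : 0 <= (c - r) * ((c - r) * 1) / (c * c) by apply: Rdiv_le_0_compat; nra.
have h2 : (c - r) * ((c - r) * 1) / (c * c) <= 1.
  apply: (Rmult_le_reg_r (c * c)); first nra.
  rewrite /Rdiv Rmult_assoc Rinv_l; nra.
lra.
Qed.

Lemma H2f_bnd c r : 0 < c -> 0 <= r -> 0 <= H2f c r /\ H2f c r * r <= 2.
Proof.
move=> hc hr; case: (Rle_lt_dec c r) => h; first by rewrite H2f_big //; lra.
rewrite /H2f pp_pos; last lra.
split; first by apply: Rdiv_le_0_compat; nra.
have -> : 2 * (c - r) / (c * c) * r = 2 * ((c - r) * r) / (c * c) by field; lra.
apply: (Rmult_le_reg_r (c * c)); first nra.
rewrite /Rdiv Rmult_assoc Rinv_l; nra.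
Qed.

Lemma Hf_le c r : 0 < c -> 0 <= r -> Hf c r <= c + H1f c r * r.
Proof.
move=> hc hr; case: (Rle_lt_dec c r) => h.
- rewrite Hf_big // H1f_big //; lra.
- have := H1f_bnd c r hc hr => hb.
  have : Hf c r <= c; last nra.
  rewrite /Hf pp_pos; last lra.
  set z := c - r.
  have hz : 0 < z <= c by rewrite /z; lra.
  have -> : r = c - z by rewrite /z; ring.
  have : z ^ 3 / (3 * (c * c)) <= z.
    apply: (Rmult_le_reg_r (3 * (c * c))); first nra.
    rewrite /Rdiv Rmult_assoc Rinv_l; last nra. simpl.
    have h1 : z * z <= c * c by nra.
    have h2 : z * z * z <= c * c * z by apply: Rmult_le_compat_r; lra.
    nra.
  lra.
Qed.

Lemma dRpH c q r : 0 < c ->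
  derivable_pt_lim (fun y => Rpower (Hf c y) q) r (q * Rpower (Hf c r) (q - 1) * H1f c r).
Proof.
move=> hc.
have := dcomp (fun x => Rpower x q) (Hf c) r _ _ (dHf c r hc) (derivable_pt_lim_power _ q (Hf_pos c r hc)).
by move=> h; eapply dval; first exact: h.
Qed.

Definition rcont (f : R -> R) x := forall eps, 0 < eps -> exists d, 0 < d /\
  forall y, Rabs (y - x) < d -> Rabs (f y - f x) < eps.

Lemma der_rcont f x l : derivable_pt_lim f x l -> rcont f x.
Proof.
move=> h.
have hc : continuity_pt f x by apply: derivable_continuous_pt; exists l.
move=> eps he; case: (hc eps he) => d [hd H].
exists d; split => // y hy.
case: (Req_dec y x) => [->|hne]; first by rewrite Rminus_diag Rabs_R0.
apply: (H y); split => //; split => //. by apply: not_eq_sym.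
Qed.

Lemma rcont_pp x : rcont pospart x.
Proof.
move=> eps he; exists eps; split => // y hy.
apply: Rle_lt_trans hy.
rewrite /pospart; unfold Rmax; repeat case: Rle_dec => ? ; rewrite /Rabs; repeat case: Rcase_abs => ?; lra.
Qed.

Lemma cv_const n c : continuous_vec (fun _ : vec n => c).
Proof. move=> x eps he; exists 1; split; first lra. move=> y _; rewrite Rminus_diag Rabs_R0; lra. Qed.

Lemma cv_coord n (k : 'I_n) : continuous_vec (fun y : vec n => y k).
Proof. move=> x eps he; exists eps; split => // y hy; exact: hy. Qed.

Lemma cv_plus n (f g : vec n -> R) : continuous_vec f -> continuous_vec g ->
  continuous_vec (fun y => f y + g y).
Proof.
move=> hf hg x eps he.
case: (hf x (eps/2) ltac:(lra)) => d1 [hd1 H1].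
case: (hg x (eps/2) ltac:(lra)) => d2 [hd2 H2].
exists (Rmin d1 d2); split; first by apply: Rmin_pos.
move=> y hy.
have a1 := H1 y (fun k => Rlt_le_trans _ _ _ (hy k) (Rmin_l _ _)).
have a2 := H2 y (fun k => Rlt_le_trans _ _ _ (hy k) (Rmin_r _ _)).
have e : f y + g y - (f x + g x) = (f y - f x) + (g y - g x) by ring.
rewrite e; apply: Rle_lt_trans; first exact: Rabs_triang. lra.
Qed.

Lemma cv_comp n (g : vec n -> R) f : continuous_vec g -> (forall x, rcont f (g x)) ->
  continuous_vec (fun y => f (g y)).
Proof.
move=> hg hf x eps he.
case: (hf x eps he) => d [hd H].
case: (hg x d hd) => d' [hd' H'].
exists d'; split => // y hy; apply: H; exact: H'.
Qed.

Lemma cv_scal n c (f : vec n -> R) : continuous_vec f -> continuous_vec (fun y => c * f y).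
Proof.
move=> hf; apply: (cv_comp _ _ (fun r => c * r)) => // x.
apply: (der_rcont _ _ (c * 1)).
exact: (derivable_pt_lim_scal (fun y => y) c (f x) 1 (did _)).
Qed.

Lemma cv_sq n (f : vec n -> R) : continuous_vec f -> continuous_vec (fun y => f y * f y).
Proof.
move=> hf; apply: (cv_comp _ _ (fun r => r * r)) => // x.
apply: (der_rcont _ _ (1 * f x + f x * 1)).
exact: (dmult _ _ _ _ _ (did _) (did _)).
Qed.

Lemma cv_mult n (f g : vec n -> R) : continuous_vec f -> continuous_vec g ->
  continuous_vec (fun y => f y * g y).
Proof.
move=> hf hg.
have e : (fun y => f y * g y) = (fun y => / 4 * ((f y + g y) * (f y + g y)) + (-/4) * ((f y + -1 * g y) * (f y + -1 * g y))).
  apply: functional_extensionality => y; field.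
rewrite e; apply: cv_plus; apply: cv_scal; apply: cv_sq; apply: cv_plus => //.
exact: cv_scal.
Qed.

Lemma cv_sum n k (F : 'I_k -> vec n -> R) : (forall i, continuous_vec (F i)) ->
  continuous_vec (fun y => sumR (fun i => F i y)).
Proof.
move=> hF; rewrite /sumR.
elim: (index_enum _) => [|a r IH].
- have -> : (fun y : vec n => \big[Rplus/0]_(i <- [::]) F i y) = (fun _ => 0).
    by apply: functional_extensionality => y; rewrite big_nil.
  exact: cv_const.
- have -> : (fun y : vec n => \big[Rplus/0]_(i <- a :: r) F i y) =
            (fun y => F a y + \big[Rplus/0]_(i <- r) F i y).
    by apply: functional_extensionality => y; rewrite big_cons.
  exact: cv_plus.
Qed.

Section Graph.
Variables (nI nJ : nat) (edge : 'I_nI -> 'I_nJ -> bool).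
Hypothesis Hcon : graph_connected (badj edge).
Variable i0 : 'I_nI.
Hypothesis Hdeg : forall i, i != i0 -> (deg edge i <= 1)%nat.

Lemma deg_uniq i j1 j2 : i != i0 -> edge i j1 -> edge i j2 -> j1 = j2.
Proof.
move=> hi h1 h2; apply/eqP; apply/negP => hne.
have : (1 < deg edge i)%nat.
  apply/card_gt1P; exists j1, j2; split => //.
  by apply/negP.
by rewrite ltnNge Hdeg.
Qed.

Lemma has_edge i (j : 'I_nJ) : exists j', edge i j'.
Proof.
have := Hcon (inl i) (inr j) => /connectP [[|v p]] /=; first by [].
move=> /andP [hv _] _.
case: v hv => [i'|j'] //= hv; by exists j'.
Qed.

Lemma hub_all j : edge i0 j.
Proof.
case hn : (edge i0 j) => //.
pose a : pred (bvert nI nJ) := fun v => match v with inr j' => j' == j | inl i => edge i j end.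
have hcl : closed (badj edge) a.
  move=> [i|j1] [i'|j2] //= he; rewrite /in_mem /=.
  -
    case hij : (edge i j).
    + have hi : i != i0 by apply/eqP => e; move: hij; rewrite e hn.
      by rewrite (deg_uniq _ _ _ hi he hij) eqxx.
    + case: eqP => // e; by rewrite -e he in hij.
  - case hij : (edge i' j).
    + have hi : i' != i0 by apply/eqP => e; move: hij; rewrite e hn.
      by rewrite (deg_uniq _ _ _ hi he hij) eqxx.
    + case: eqP => // e; by rewrite -e he in hij.
have := closed_connect hcl (Hcon (inr j) (inl i0)).
by rewrite /in_mem /= eqxx hn.
Qed.

Lemma single_edge i (j : 'I_nJ) : i != i0 -> exists j0, edge i j0 /\ forall j', j' <> j0 -> edge i j' = false.
Proof.
move=> hi; case: (has_edge i j) => j0 h0; exists j0; split => // j' hne.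
apply/negP => h; apply: hne; exact: (deg_uniq _ _ _ hi h h0).
Qed.
End Graph.

Section GG.
Variables (nI nJ : nat) (edge : 'I_nI -> 'I_nJ -> bool) (i0 : 'I_nI).
Hypothesis Hhub : forall j, edge i0 j.
Hypothesis Hsing : forall i, i != i0 -> exists j0, edge i j0 /\ forall j', j' <> j0 -> edge i j' = false.

Lemma row_single i (g : 'I_nJ -> R) : i != i0 ->
  exists j0, edge i j0 /\ sumR (fun j => if edge i j then g j else 0) = g j0.
Proof.
move=> hi; case: (Hsing i hi) => j0 [h0 H]; exists j0; split => //.
rewrite (sumR_single _ _ j0) ?h0 // => j hj; by rewrite H.
Qed.

Lemma G_exists (alpha : vec nI) (beta : vec nJ) : sumR alpha = sumR beta ->
  exists psi, is_G edge alpha beta psi.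
Proof.
move=> hsum.
pose w (k : 'I_nI) (j : 'I_nJ) := if k == i0 then 0 else (if edge k j then alpha k else 0).
have hw : forall k : 'I_nI, sumR (fun j => w k j) = if k == i0 then 0 else alpha k.
  move=> k; rewrite /w; case: eqP => [_|hk]; first exact: sumR_zero.
  have hk' : k != i0 by apply/eqP.
  case: (row_single k (fun _ => alpha k) hk') => j0 [_ ->]. done.
exists (fun i j => if i == i0 then beta j - sumR (fun k => w k j) else (if edge i j then alpha i else 0)).
split; [|split].
- move=> i; case: eqP => [->|hi].
  + rewrite sumR_sub sumR_exch (sumR_ext _ _ _ hw) -hsum (sumR_drop _ alpha i0). ring.
  + have hi' : i != i0 by apply/eqP.
    by case: (row_single i (fun _ => alpha i) hi') => j0 [_ ->].
- move=> j; rewrite (sumR_drop _ _ i0) eqxx.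
  have -> : sumR (fun k => if k == i0 then 0 else (if k == i0 then beta j - sumR (fun k0 => w k0 j) else (if edge k j then alpha k else 0))) = sumR (fun k => w k j).
    by apply: sumR_ext => k; rewrite /w; case: eqP.
  ring.
- move=> i j he; case: eqP => [e|_]; first by rewrite e Hhub in he.
  by rewrite he.
Qed.

Lemma Gmap_spec (alpha : vec nI) (beta : vec nJ) : sumR alpha = sumR beta ->
  is_G edge alpha beta (Gmap edge alpha beta).
Proof. move=> h; rewrite /Gmap; apply: epsilon_spec; exact: G_exists. Qed.

Variables (mu : 'I_nI -> 'I_nJ -> R) (alpha : vec nI) (beta : vec nJ) (psi : mat nI nJ).
Hypothesis HG : is_G edge alpha beta psi.

Lemma row_formula i : i != i0 -> exists j0, edge i j0 /\
  sumR (fun j => mu i j * psi i j) = mu i j0 * alpha i /\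
  sumR (fun j => (mu i j - mu i0 j) * psi i j) = (mu i j0 - mu i0 j0) * alpha i.
Proof.
move=> hi; case: (Hsing i hi) => j0 [h0 H]; exists j0; split => //.
case: HG => [hr [_ hs]].
have hz : forall j, j <> j0 -> psi i j = 0 by move=> j hj; apply: hs; apply: H.
have hp : psi i j0 = alpha i.
  rewrite -(hr i) (sumR_single _ _ j0) //.
rewrite -hp; split.
- by rewrite (sumR_single _ _ j0) // => j hj; rewrite hz //; ring.
- by rewrite (sumR_single _ _ j0) // => j hj; rewrite hz //; ring.
Qed.

Lemma total_formula :
  sumR (fun i => sumR (fun j => mu i j * psi i j)) =
  sumR (fun j => mu i0 j * beta j) + sumR (fun i => sumR (fun j => (mu i j - mu i0 j) * psi i j)).
Proof.
case: HG => [_ [hc _]].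
rewrite sumR_exch [in X in _ = _ + X]sumR_exch -sumR_plus.
apply: sumR_ext => j.
rewrite -(hc j) -sumR_scal -sumR_plus; apply: sumR_ext => i; ring.
Qed.
End GG.

Lemma Rdiv_le_0_compat' a b : 0 <= a -> 0 < b -> 0 <= a / b.
Proof. move=> ha hb; apply: Rmult_le_pos => //; apply: Rlt_le; exact: Rinv_0_lt_compat. Qed.

Definition zc {n : nat} (i0 : 'I_n) (x : vec n) (i : 'I_n) : R := if i == i0 then 0 else x i.
Definition qb {n : nat} (a : R) (i0 : 'I_n) (x : vec n) : R :=
  a * (esum x * esum x) + sumR (fun i => zc i0 x i * zc i0 x i).
Definition dq {n : nat} (a : R) (i0 : 'I_n) (x : vec n) (i : 'I_n) : R :=
  2 * a * esum x + 2 * zc i0 x i.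
Definition ddq {n : nat} (a : R) (i0 : 'I_n) (i k : 'I_n) : R :=
  2 * a + (if (i == k) && (i != i0) then 2 else 0).
Definition Qb {n : nat} (a : R) (i0 : 'I_n) (i k : 'I_n) : R :=
  a + (if (i == k) && (i != i0) then 1 else 0).

Lemma esum_shift {n} (x : vec n) i t : esum (shift x i t) = esum x + t.
Proof.
rewrite /esum /shift.
have -> : sumR (fun k => if k == i then x k + t else x k) =
          sumR (fun k => x k + (if k == i then t else 0)).
  by apply: sumR_ext => k; case: eqP => _; ring.
rewrite sumR_plus (sumR_single _ (fun k => if k == i then t else 0) i) ?eqxx // => k /eqP /negbTE ->. done.
Qed.

Lemma qb_shift {n} a (i0 : 'I_n) (x : vec n) i t :
  qb a i0 (shift x i t) = qb a i0 x + dq a i0 x i * t + (ddq a i0 i i / 2) * (t * t).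
Proof.
rewrite /qb /dq /ddq esum_shift.
have -> : sumR (fun k => zc i0 (shift x i t) k * zc i0 (shift x i t) k) =
          sumR (fun k => zc i0 x k * zc i0 x k +
             (if k == i then 2 * zc i0 x i * t + (if i == i0 then 0 else t * t) else 0)).
  apply: sumR_ext => k; rewrite /zc /shift.
  case: (eqVneq k i) => [->|hki].
  - case: (i == i0); ring.
  - case: (k == i0); ring.
rewrite sumR_plus (sumR_single _ (fun k => if k == i then 2 * zc i0 x i * t + (if i == i0 then 0 else t * t) else 0) i); last first.
  by move=> k /eqP /negbTE ->.
rewrite eqxx /=.
case: (eqVneq i i0) => [e|hi] /=.
- rewrite /zc e eqxx /=; field.
- field.
Qed.

Lemma dq_shift {n} a (i0 : 'I_n) (x : vec n) i k t :
  dq a i0 (shift x k t) i = dq a i0 x i + ddq a i0 i k * t.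
Proof.
rewrite /dq /ddq esum_shift /zc /shift.
case: (eqVneq i k) => [->|hik] /=.
- case: (k == i0) => /=; ring.
- case: (i == i0); ring.
Qed.

Lemma qform_Qb {n} a (i0 : 'I_n) t (x : vec n) :
  qform (fun i k => t * Qb a i0 i k) x = t * qb a i0 x.
Proof.
rewrite /qform /qb /Qb /esum.
have step : forall i, sumR (fun k => x i * (t * (a + (if (i == k) && (i != i0) then 1 else 0))) * x k)
   = t * a * (x i * sumR x) + t * (zc i0 x i * zc i0 x i).
  move=> i.
  have -> : sumR (fun k => x i * (t * (a + (if (i == k) && (i != i0) then 1 else 0))) * x k)
    = sumR (fun k => t * a * (x i * x k) + t * (x i * (if (i == k) && (i != i0) then 1 else 0) * x k)).
    by apply: sumR_ext => k; ring.
  rewrite sumR_plus sumR_scal sumR_scal sumR_scal.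
  rewrite (sumR_single _ (fun k => x i * (if (i == k) && (i != i0) then 1 else 0) * x k) i).
  - rewrite eqxx /= /zc; case: (i == i0) => /=; ring.
  - move=> k hk; rewrite (_ : (i == k) = false) /=; first ring.
    apply/negbTE/eqP => e; apply: hk; by rewrite e.
rewrite (sumR_ext _ _ _ step) sumR_plus sumR_scal sumR_scal.
have -> : sumR (fun i => x i * sumR x) = sumR x * sumR x.
  rewrite -sumR_scal; apply: sumR_ext => i; ring.
ring.
Qed.

Lemma esum_split {n} (i0 : 'I_n) (x : vec n) : esum x = x i0 + sumR (fun i => zc i0 x i).
Proof. rewrite /esum (sumR_drop _ _ i0); congr (_ + _); apply: sumR_ext => k; by rewrite /zc. Qed.

Lemma sumsq_split {n} (i0 : 'I_n) (x : vec n) :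
  sumR (fun i => x i * x i) = x i0 * x i0 + sumR (fun i => zc i0 x i * zc i0 x i).
Proof.
rewrite (sumR_drop _ _ i0); congr (_ + _); apply: sumR_ext => k; rewrite /zc; case: (k == i0); ring.
Qed.

Lemma sumsq_bound {n} (i0 : 'I_n) (x : vec n) :
  sumR (fun i => x i * x i) <= 2 * (esum x * esum x) + (2 * INR n + 1) * sumR (fun i => zc i0 x i * zc i0 x i).
Proof.
rewrite (sumsq_split i0).
have hs := esum_split i0 x.
have cs := sumR_CS _ (fun i => zc i0 x i).
set Z := sumR (fun i => zc i0 x i) in hs cs *.
set Y := sumR (fun i => zc i0 x i * zc i0 x i) in cs *.
set s := esum x in hs *.
have hY : 0 <= Y by apply: sumR_nonneg => i; apply: Rle_0_sqr.
clearbody Z Y s.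
have e : x i0 = s - Z by lra.
rewrite e.
have := Rle_0_sqr (s + Z). rewrite /Rsqr => h.
nra.
Qed.

Lemma qb_ge0 n a (i0 : 'I_n) (x : vec n) : 0 <= a -> 0 <= qb a i0 x.
Proof.
move=> ha; rewrite /qb.
have := sumR_nonneg _ (fun i => zc i0 x i * zc i0 x i) (fun i => Rle_0_sqr _).
have := Rle_0_sqr (esum x); rewrite /Rsqr => h1 h2.
have : 0 <= a * (esum x * esum x) by apply: Rmult_le_pos.
lra.
Qed.

Lemma qb_lower {n} a (i0 : 'I_n) (x : vec n) : 0 < a ->
  sumR (fun i => x i * x i) <= (2 / a + 2 * INR n + 1) * qb a i0 x.
Proof.
move=> ha; have h := sumsq_bound i0 x.
rewrite /qb.
have hY := sumR_nonneg _ (fun i => zc i0 x i * zc i0 x i) (fun i => Rle_0_sqr _).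
set Y := sumR (fun i => zc i0 x i * zc i0 x i) in h hY *.
set S := esum x * esum x in h *.
have hS : 0 <= S by apply: Rle_0_sqr.
have hn := pos_INR n.
clearbody Y S.
have e : (2 / a + 2 * INR n + 1) * (a * S + Y) = 2 * S + (2 * INR n + 1) * Y + (2 / a) * Y + (2 * INR n + 1) * a * S.
  field; lra.
rewrite e.
have : 0 <= 2 / a * Y by apply: Rmult_le_pos => //; apply: Rdiv_le_0_compat'; lra.
have : 0 <= (2 * INR n + 1) * a * S by apply: Rmult_le_pos => //; nra.
lra.
Qed.

Lemma amgm u v p : 0 < p -> u * v <= (p * u * u + v * v / p) / 2.
Proof.
move=> hp.
have h := Rle_0_sqr (p * u - v). rewrite /Rsqr in h.
have e : (p * u * u + v * v / p) / 2 - u * v = (p * u - v) * (p * u - v) / (2 * p) by field; lra.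
have : 0 <= (p * u - v) * (p * u - v) / (2 * p) by apply: Rmult_le_pos => //; apply: Rlt_le; apply: Rinv_0_lt_compat; lra.
lra.
Qed.

Lemma abs_prod_le a b A B : Rabs a <= A -> Rabs b <= B -> a * b <= A * B.
Proof.
move=> ha hb; apply: Rle_trans (Rle_abs _) _; rewrite Rabs_mult.
apply: Rmult_le_compat => //; apply: Rabs_pos.
Qed.

Lemma pt_neg a m M n X s mu d ell :
  0 < a -> 0 < m -> 0 < M -> 0 < n -> a * (4 * n * (M * M)) <= m * m ->
  m <= mu -> Rabs d <= M -> Rabs ell <= M ->
  X * (- (mu * X) + ell) - a * s * (d * X) <=
  - (5 * m / 8) * (X * X) + (a * m / (4 * n)) * (s * s) + 2 * (M * M) / m.
Proof.
move=> ha hm hM hn hc hmu hd hl.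
have hX : 0 <= X * X by apply: Rle_0_sqr.
have h1 : - (mu * (X * X)) <= - (m * (X * X)) by apply: Ropp_le_contravar; apply: Rmult_le_compat_r.
have h2 : X * ell <= M * Rabs X.
  rewrite Rmult_comm; apply: abs_prod_le => //; lra.
have h2' : M * Rabs X <= (m / 8) * (X * X) + 2 * (M * M) / m.
  have := amgm (Rabs X) M (m / 4) ltac:(lra).
  have e : Rabs X * Rabs X = X * X by rewrite -Rabs_mult Rabs_right //; lra.
  have e2 : (m / 4 * Rabs X * Rabs X + M * M / (m / 4)) / 2 = m / 8 * (Rabs X * Rabs X) + 2 * (M * M) / m by field; lra.
  rewrite e2 e. lra.
have h3 : - (s * (d * X)) <= Rabs s * (M * Rabs X).
  have : - (s * (d * X)) = s * ((- d) * X) by ring.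
  move=> ->; apply: abs_prod_le; first lra.
  rewrite Rabs_mult Rabs_Ropp; apply: Rmult_le_compat_r => //; apply: Rabs_pos.
have h3' : Rabs s * (M * Rabs X) <= (m / (4 * n)) * (s * s) + (n * (M * M) / m) * (X * X).
  have := amgm (Rabs s) (M * Rabs X) (m / (2 * n)) ltac:(apply: Rdiv_lt_0_compat; lra).
  have e : Rabs X * Rabs X = X * X by rewrite -Rabs_mult Rabs_right //; lra.
  have e1 : Rabs s * Rabs s = s * s by rewrite -Rabs_mult Rabs_right //; apply: Rle_ge; apply: Rle_0_sqr.
  have e2 : (m / (2 * n) * Rabs s * Rabs s + M * Rabs X * (M * Rabs X) / (m / (2 * n))) / 2
     = m / (4 * n) * (Rabs s * Rabs s) + n * (M * M) / m * (Rabs X * Rabs X) by field; lra.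
  rewrite e2 e e1. lra.
have h4 : a * (n * (M * M) / m) <= m / 4.
  have e : a * (n * (M * M) / m) = (a * (4 * n * (M * M))) / (4 * m) by field; lra.
  rewrite e. apply: (Rmult_le_reg_r (4 * m)); first lra.
  have e' : a * (4 * n * (M * M)) / (4 * m) * (4 * m) = a * (4 * n * (M * M)) by field; lra.
  rewrite e'. nra.
have h5 : a * (n * (M * M) / m) * (X * X) <= m / 4 * (X * X) by apply: Rmult_le_compat_r.
have e : X * (- (mu * X) + ell) - a * s * (d * X) = - (mu * (X * X)) + X * ell + a * (- (s * (d * X))) by ring.
rewrite e.
have h6 : a * (- (s * (d * X))) <= a * ((m / (4 * n)) * (s * s) + (n * (M * M) / m) * (X * X)).
  apply: Rmult_le_compat_l; lra.
have e3 : a * ((m / (4 * n)) * (s * s) + (n * (M * M) / m) * (X * X)) =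
   (a * m / (4 * n)) * (s * s) + a * (n * (M * M) / m) * (X * X) by field; lra.
lra.
Qed.

Lemma pt_pos a m M X s u mu d g ell :
  0 < a -> a <= 1 -> 0 < m -> 0 < M -> 0 < s -> 0 <= u <= 1 ->
  m <= mu -> mu <= M -> 0 <= g <= M -> Rabs d <= M -> Rabs ell <= M ->
  X * (- (mu * (X - s * u)) - g * s * u + ell) - a * s * (d * (X - s * u)) <=
  - (3 * m / 4) * (X * X) + (18 * (M * M) / m + M) * (s * s) + 2 * (M * M) / m.
Proof.
move=> ha ha1 hm hM hs hu hmu hmuM hg hd hl.
have hX : 0 <= X * X by apply: Rle_0_sqr.
have eX : Rabs X * Rabs X = X * X by rewrite -Rabs_mult Rabs_right //; lra.
have hAX := Rabs_pos X.
have e : X * (- (mu * (X - s * u)) - g * s * u + ell) - a * s * (d * (X - s * u)) =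
  - (mu * (X * X)) + s * ((mu * u) * X) + s * ((- (g * u)) * X) + X * ell + s * ((- (a * d)) * X) + (s * s) * (a * d * u) by ring.
rewrite e.
have h1 : - (mu * (X * X)) <= - (m * (X * X)) by apply: Ropp_le_contravar; apply: Rmult_le_compat_r.
have hmu0 : 0 <= mu by lra.
have b1 : (mu * u) * X <= M * Rabs X.
  apply: abs_prod_le; last lra.
  rewrite Rabs_mult !Rabs_right; try lra. nra. 
have b2 : (- (g * u)) * X <= M * Rabs X.
  apply: abs_prod_le; last lra.
  rewrite Rabs_Ropp Rabs_mult !Rabs_right; try lra. nra.
have b3 : (- (a * d)) * X <= M * Rabs X.
  apply: abs_prod_le; last lra.
  rewrite Rabs_Ropp Rabs_mult Rabs_right; last lra.
  have := Rabs_pos d; nra.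
have b4 : a * d * u <= M.
  have : Rabs (a * d * u) <= M.
    rewrite !Rabs_mult (Rabs_right a) ?(Rabs_right u); try lra.
    have hd0 := Rabs_pos d.
    have q1 : a * Rabs d <= Rabs d by nra.
    have q0 : 0 <= a * Rabs d by apply: Rmult_le_pos; lra.
    have q2 : a * Rabs d * u <= a * Rabs d * 1 by apply: Rmult_le_compat_l; lra.
    lra.
  move=> h; apply: Rle_trans (Rle_abs _) h.
have c1 : s * ((mu * u) * X) <= s * (M * Rabs X) by apply: Rmult_le_compat_l; lra.
have c2 : s * ((- (g * u)) * X) <= s * (M * Rabs X) by apply: Rmult_le_compat_l; lra.
have c3 : s * ((- (a * d)) * X) <= s * (M * Rabs X) by apply: Rmult_le_compat_l; lra.
have c4 : (s * s) * (a * d * u) <= (s * s) * M by apply: Rmult_le_compat_l; nra.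
have c5 : X * ell <= M * Rabs X by rewrite Rmult_comm; apply: abs_prod_le; lra.
have d1 : 3 * (s * (M * Rabs X)) <= (m / 8) * (X * X) + 18 * (M * M) / m * (s * s).
  have := amgm (Rabs X) (3 * M * s) (m / 4) ltac:(lra).
  have e2 : (m / 4 * Rabs X * Rabs X + 3 * M * s * (3 * M * s) / (m / 4)) / 2 = m / 8 * (Rabs X * Rabs X) + 18 * (M * M) / m * (s * s) by field; lra.
  rewrite e2 eX. 
  have e3 : Rabs X * (3 * M * s) = 3 * (s * (M * Rabs X)) by ring.
  rewrite e3. lra.
have d2 : M * Rabs X <= (m / 8) * (X * X) + 2 * (M * M) / m.
  have := amgm (Rabs X) M (m / 4) ltac:(lra).
  have e2 : (m / 4 * Rabs X * Rabs X + M * M / (m / 4)) / 2 = m / 8 * (Rabs X * Rabs X) + 2 * (M * M) / m by field; lra.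
  rewrite e2 eX. lra.
have e4 : (18 * (M * M) / m + M) * (s * s) = 18 * (M * M) / m * (s * s) + (s * s) * M by ring.
rewrite e4.
lra.
Qed.

Lemma filt_sum nI nJ (edge : 'I_nI -> 'I_nJ -> bool) (mu : mat nI nJ) (P : mat nI nJ) i :
  (forall i j, edge i j = false -> mu i j = 0) ->
  \big[Rplus/0]_(j < nJ | edge i j) (mu i j * P i j) = sumR (fun j => mu i j * P i j).
Proof.
move=> h; rewrite /sumR big_mkcond; apply: eq_bigr => j _.
case e: (edge i j) => //. rewrite h //; ring.
Qed.

Lemma pos_neg_id s : s - pospart s = - negpart s.
Proof. rewrite /pospart /negpart; unfold Rmax; repeat case: Rle_dec => ?; lra. Qed.

Section Lyap.
Variables (nI nJ : nat) (edge : 'I_nI -> 'I_nJ -> bool) (i0 : 'I_nI).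
Variables (mu : mat nI nJ) (gam ell : vec nI) (mL M a : R).
Hypothesis Hhub : forall j, edge i0 j.
Hypothesis Hsing : forall i, i != i0 -> exists j0, edge i j0 /\ forall j', j' <> j0 -> edge i j' = false.
Hypothesis Hmu_n : forall i j, edge i j = false -> mu i j = 0.
Hypothesis HmL : 0 < mL.
Hypothesis HmuL : forall i j, edge i j -> mL <= mu i j.
Hypothesis HmuU : forall i j, 0 <= mu i j <= M.
Hypothesis Hg : forall i, 0 <= gam i <= M.
Hypothesis Hl : forall i, Rabs (ell i) <= M.
Hypothesis HmM : mL <= M.
Hypothesis Ha : 0 < a <= 1.
Hypothesis Hn : 1 <= INR nI.
Hypothesis Hac : a * (4 * INR nI * (M * M)) <= mL * mL.

Definition Kc := INR nI * (18 * (M * M) / mL + M) + 1 + mL.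
Definition dlt := Rmin (1/4) (mL / (8 * Kc * (2 * INR nI + 1))).
Definition Cc := a * (INR nI * INR nI) * (M * M) / mL + 2 * INR nI * (M * M) / mL +
                 INR nI * INR nI * (M * M) / 2 + 2 * INR nI * (M * M) / mL.

Lemma Lyap_main (x : vec nI) (uc : vec nI) (us : vec nJ) :
  in_U uc us -> esum x <= dlt * vnorm x ->
  a * esum x * sumR (fun i => drift edge mu gam ell x uc us i) +
  sumR (fun i => zc i0 x i * drift edge mu gam ell x uc us i) <= Cc - mL / 4 * qb a i0 x.
Proof.
move=> [huc [hus [hsuc hsus]]] hreg.
set s := esum x.
set sg := pospart s. set tu := negpart s.
set alpha := fun i => x i - sg * uc i.
set beta := fun j => - (tu * us j).
set psi := Ghat edge uc us x.
have hsum : sumR alpha = sumR beta.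
  rewrite /alpha /beta sumR_sub sumR_scal sumR_opp sumR_scal.
  have -> : sumR x = s by [].
  rewrite -/(esum uc) -/(esum us) hsuc hsus !Rmult_1_r pos_neg_id //.
have HG : is_G edge alpha beta psi by exact: (Gmap_spec _ _ _ _ Hhub Hsing _ _ hsum).
have hb : forall i, drift edge mu gam ell x uc us i = - sumR (fun j => mu i j * psi i j) - gam i * sg * uc i + ell i.
  move=> i; rewrite /drift filt_sum //.
have hu1 : forall i, uc i <= 1 by move=> i; rewrite -hsuc; apply: sumR_ge_single.
pose W i := sumR (fun j => (mu i j - mu i0 j) * psi i j).
have hW0 : W i0 = 0 by rewrite /W -(sumR_zero nJ); apply: sumR_ext => j; ring.
have htot : sumR (fun i => drift edge mu gam ell x uc us i) =
   - (sumR (fun j => mu i0 j * beta j) + sumR W) - sg * sumR (fun i => gam i * uc i) + sumR ell.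
  rewrite (sumR_ext _ _ _ hb) sumR_plus sumR_sub sumR_opp.
  rewrite (total_formula _ _ _ i0 mu _ _ _ HG).
  rewrite -sumR_scal. 
  have -> : sumR (fun i => gam i * sg * uc i) = sumR (fun i => sg * (gam i * uc i)) by apply: sumR_ext => i; ring.
  done.
have hF : a * s * sumR (fun i => drift edge mu gam ell x uc us i) +
    sumR (fun i => zc i0 x i * drift edge mu gam ell x uc us i) =
    a * s * (- sumR (fun j => mu i0 j * beta j) - sg * sumR (fun i => gam i * uc i) + sumR ell) +
    sumR (fun i => zc i0 x i * drift edge mu gam ell x uc us i - a * s * W i).
  rewrite htot sumR_sub sumR_scal; ring.
rewrite hF.
have hCv : - sumR (fun j => mu i0 j * beta j) = tu * sumR (fun j => mu i0 j * us j).
  rewrite /beta -sumR_opp -sumR_scal; apply: sumR_ext => j; ring.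
have hCvL : mL <= sumR (fun j => mu i0 j * us j).
  have : sumR (fun j => mL * us j) <= sumR (fun j => mu i0 j * us j).
    apply: sumR_le => j; apply: Rmult_le_compat_r; [exact: hus | exact: HmuL].
  rewrite sumR_scal -/(esum us) hsus Rmult_1_r //.
have hG0 : 0 <= sumR (fun i => gam i * uc i).
  apply: sumR_nonneg => i; apply: Rmult_le_pos; [case: (Hg i) | exact: huc] => //.
have hL : Rabs (sumR ell) <= INR nI * M.
  apply: Rle_trans (sumR_abs _ _) _; exact: sumR_const_le.
have hn := Hn.
have hM0 : 0 < M by lra.
have hrow : forall i, i != i0 -> exists mui d, mL <= mui /\ mui <= M /\ Rabs d <= M /\
    sumR (fun j => mu i j * psi i j) = mui * alpha i /\ W i = d * alpha i.
  move=> i hi; case: (row_formula _ _ _ _ Hsing mu _ _ _ HG i hi) => j0 [he [h1 h2]].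
  exists (mu i j0), (mu i j0 - mu i0 j0); split; first exact: HmuL.
  split; first by case: (HmuU i j0).
  split; last by split.
  case: (HmuU i j0) => ? ?; case: (HmuU i0 j0) => ? ?.
  rewrite /Rabs; case: Rcase_abs => _; lra.
set y2 := sumR (fun i => zc i0 x i * zc i0 x i).
have hy2 : 0 <= y2 by apply: sumR_nonneg => i; apply: Rle_0_sqr.
have hqb : qb a i0 x = a * (s * s) + y2 by [].
rewrite hqb.
case: (Rle_lt_dec s 0) => hs.
-
  have hsg : sg = 0 by rewrite /sg pp_neg.
  have htu : tu = - s by rewrite /tu /negpart; apply: Rmax_left; lra.
  have hE : forall i, zc i0 x i * drift edge mu gam ell x uc us i - a * s * W i <=
      - (5 * mL / 8) * (zc i0 x i * zc i0 x i) + (a * mL / (4 * INR nI)) * (s * s) + 2 * (M * M) / mL.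
    move=> i.
    have hnn : 0 <= (a * mL / (4 * INR nI)) * (s * s) + 2 * (M * M) / mL.
      have : 0 <= a * mL / (4 * INR nI) by apply: Rdiv_le_0_compat'; nra.
      have : 0 <= 2 * (M * M) / mL by apply: Rdiv_le_0_compat'; nra.
      have := Rle_0_sqr s; rewrite /Rsqr; nra.
    case: (eqVneq i i0) => [->|hi].
    + rewrite /zc eqxx hW0; lra.
    + case: (hrow i hi) => mui [d [h1 [h2 [h3 [h4 h5]]]]].
      rewrite hb h4 h5 /alpha /zc (negbTE hi) hsg.
      have e : x i * (- (mui * (x i - 0 * uc i)) - gam i * 0 * uc i + ell i) - a * s * (d * (x i - 0 * uc i))
             = x i * (- (mui * x i) + ell i) - a * s * (d * x i) by ring.
      rewrite e; apply: pt_neg => //; lra.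
  have hsumE := sumR_le _ _ _ hE.
  have eR : sumR (fun i => - (5 * mL / 8) * (zc i0 x i * zc i0 x i) + (a * mL / (4 * INR nI)) * (s * s) + 2 * (M * M) / mL)
      = - (5 * mL / 8) * y2 + sumR (fun _ : 'I_nI => (a * mL / (4 * INR nI)) * (s * s) + 2 * (M * M) / mL).
    rewrite /y2 -sumR_scal -sumR_plus; apply: sumR_ext => i; ring.
  rewrite eR in hsumE.
  have hK := sumR_const_le _ (fun _ : 'I_nI => (a * mL / (4 * INR nI)) * (s * s) + 2 * (M * M) / mL) _ (fun _ => Rle_refl _).
  rewrite hCv hsg htu.
  have hL2 : a * s * sumR ell <= (a * mL / 4) * (s * s) + a * (INR nI * INR nI) * (M * M) / mL.
    have h1 : s * sumR ell <= Rabs s * (INR nI * M) by apply: abs_prod_le => //; lra.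
    have h2 := amgm (Rabs s) (INR nI * M) (mL / 2) ltac:(lra).
    have es : Rabs s * Rabs s = s * s by rewrite -Rabs_mult Rabs_right //; apply: Rle_ge; apply: Rle_0_sqr.
    have e2 : (mL / 2 * Rabs s * Rabs s + INR nI * M * (INR nI * M) / (mL / 2)) / 2 =
              mL / 4 * (Rabs s * Rabs s) + INR nI * INR nI * (M * M) / mL by field; lra.
    rewrite e2 es in h2.
    have : a * (s * sumR ell) <= a * (mL / 4 * (s * s) + INR nI * INR nI * (M * M) / mL).
      apply: Rmult_le_compat_l; lra.
    have e3 : a * (mL / 4 * (s * s) + INR nI * INR nI * (M * M) / mL) = a * mL / 4 * (s * s) + a * (INR nI * INR nI) * (M * M) / mL by field; lra.
    rewrite e3; have e4 : a * s * sumR ell = a * (s * sumR ell) by ring. rewrite e4; lra.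
  have hCv2 : a * s * (- s * sumR (fun j => mu i0 j * us j)) <= - a * mL * (s * s).
    have e : a * s * (- s * sumR (fun j => mu i0 j * us j)) = - (a * (s * s)) * sumR (fun j => mu i0 j * us j) by ring.
    rewrite e.
    have : a * (s * s) * mL <= a * (s * s) * sumR (fun j => mu i0 j * us j).
      apply: Rmult_le_compat_l => //; apply: Rmult_le_pos; [lra | apply: Rle_0_sqr].
    lra.
  have eK : INR nI * (a * mL / (4 * INR nI) * (s * s) + 2 * (M * M) / mL) =
            a * mL / 4 * (s * s) + 2 * INR nI * (M * M) / mL by field; lra.
  rewrite eK in hK.
  have e5 : a * s * (- s * sumR (fun j => mu i0 j * us j) - 0 * sumR (fun i => gam i * uc i) + sumR ell)
     = a * s * (- s * sumR (fun j => mu i0 j * us j)) + a * s * sumR ell by ring.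
  rewrite e5.
  rewrite /Cc.
  have hss : 0 <= s * s by apply: Rle_0_sqr.
  have : 0 <= INR nI * INR nI * (M * M) / 2 + 2 * INR nI * (M * M) / mL.
    have : 0 <= INR nI * INR nI * (M * M) / 2 by apply: Rdiv_le_0_compat'; nra.
    have : 0 <= 2 * INR nI * (M * M) / mL by apply: Rdiv_le_0_compat'; nra.
    lra.
  have : mL / 4 * (a * (s * s)) <= a * mL / 2 * (s * s).
    have hp : 0 <= a * mL * (s * s) by apply: Rmult_le_pos; [apply: Rmult_le_pos; lra | exact: hss].
    lra.
  have hmy : 0 <= mL * y2 by apply: Rmult_le_pos; lra.
  lra.
-
  have hsg : sg = s by rewrite /sg pp_pos.
  have htu : tu = 0 by rewrite /tu /negpart; apply: Rmax_right; lra.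
  have hE : forall i, zc i0 x i * drift edge mu gam ell x uc us i - a * s * W i <=
      - (3 * mL / 4) * (zc i0 x i * zc i0 x i) + (18 * (M * M) / mL + M) * (s * s) + 2 * (M * M) / mL.
    move=> i.
    have hnn : 0 <= (18 * (M * M) / mL + M) * (s * s) + 2 * (M * M) / mL.
      have : 0 <= 18 * (M * M) / mL by apply: Rdiv_le_0_compat'; nra.
      have : 0 <= 2 * (M * M) / mL by apply: Rdiv_le_0_compat'; nra.
      nra.
    case: (eqVneq i i0) => [->|hi].
    + rewrite /zc eqxx hW0; lra.
    + case: (hrow i hi) => mui [d [h1 [h2 [h3 [h4 h5]]]]].
      rewrite hb h4 h5 /alpha /zc (negbTE hi) hsg.
      have hu := conj (huc i) (hu1 i).
      have hgi := Hg i.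
      apply: pt_pos => //; lra.
  have hsumE := sumR_le _ _ _ hE.
  have eR : sumR (fun i => - (3 * mL / 4) * (zc i0 x i * zc i0 x i) + (18 * (M * M) / mL + M) * (s * s) + 2 * (M * M) / mL)
      = - (3 * mL / 4) * y2 + sumR (fun _ : 'I_nI => (18 * (M * M) / mL + M) * (s * s) + 2 * (M * M) / mL).
    rewrite /y2 -sumR_scal -sumR_plus; apply: sumR_ext => i; ring.
  rewrite eR in hsumE.
  have hK := sumR_const_le _ (fun _ : 'I_nI => (18 * (M * M) / mL + M) * (s * s) + 2 * (M * M) / mL) _ (fun _ => Rle_refl _).
  rewrite hCv hsg htu.
  have hL2 : a * s * sumR ell <= (s * s) / 2 + INR nI * INR nI * (M * M) / 2.
    have h1 : s * sumR ell <= Rabs s * (INR nI * M) by apply: abs_prod_le => //; lra.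
    rewrite Rabs_right in h1; last lra.
    have h2 := amgm s (INR nI * M) 1 ltac:(lra).
    have h3 : a * (s * sumR ell) <= 1 * (s * sumR ell) \/ s * sumR ell < 0.
      case: (Rle_lt_dec 0 (s * sumR ell)) => h; last by right.
      left; apply: Rmult_le_compat_r => //; lra.
    have e4 : a * s * sumR ell = a * (s * sumR ell) by ring.
    rewrite e4.
    case: h3 => h3.
    + have e5 : (1 * s * s + INR nI * M * (INR nI * M) / 1) / 2 = s * s / 2 + INR nI * INR nI * (M * M) / 2 by field.
      rewrite e5 in h2. lra.
    + have : 0 <= a * (- (s * sumR ell)) by apply: Rmult_le_pos; lra.
      have : 0 <= s * s / 2 + INR nI * INR nI * (M * M) / 2.
        have := Rle_0_sqr s; rewrite /Rsqr => ?.
        have : 0 <= INR nI * INR nI * (M * M) by nra. lra.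
      lra.
  have hGs : 0 <= a * s * (s * sumR (fun i => gam i * uc i)).
    apply: Rmult_le_pos; first nra. apply: Rmult_le_pos; lra.
  have e5 : a * s * (0 * sumR (fun j => mu i0 j * us j) - s * sumR (fun i => gam i * uc i) + sumR ell)
     = - (a * s * (s * sumR (fun i => gam i * uc i))) + a * s * sumR ell by ring.
  rewrite e5.
  have hN : vnorm x * vnorm x = sumR (fun i => x i * x i).
    rewrite /vnorm sqrt_sqrt //; apply: sumR_nonneg => i; apply: Rle_0_sqr.
  have hbnd := sumsq_bound i0 x. rewrite -/s -/y2 -hN in hbnd.
  have hNpos : 0 <= vnorm x by apply: sqrt_pos.
  have hdpos : 0 < dlt.
    rewrite /dlt; apply: Rmin_pos; first lra.
    apply: Rdiv_lt_0_compat => //; rewrite /Kc.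
    have : 0 <= INR nI * (18 * (M * M) / mL + M).
      apply: Rmult_le_pos; first lra.
      have : 0 <= 18 * (M * M) / mL by apply: Rdiv_le_0_compat'; nra. lra.
    nra.
  have hd1 : dlt <= 1/4 by apply: Rmin_l.
  have hKpos : mL <= Kc.
    rewrite /Kc.
    have : 0 <= INR nI * (18 * (M * M) / mL + M).
      apply: Rmult_le_pos; first lra.
      have : 0 <= 18 * (M * M) / mL by apply: Rdiv_le_0_compat'; nra. lra.
    lra.
  have hd2 : dlt * (8 * Kc * (2 * INR nI + 1)) <= mL.
    have : dlt <= mL / (8 * Kc * (2 * INR nI + 1)) by apply: Rmin_r.
    move=> h. have hp : 0 < 8 * Kc * (2 * INR nI + 1) by nra.
    have := Rmult_le_compat_r _ _ _ (Rlt_le _ _ hp) h.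
    have -> : mL / (8 * Kc * (2 * INR nI + 1)) * (8 * Kc * (2 * INR nI + 1)) = mL by field; lra.
    done.
  have hs2 : s * s <= dlt * dlt * (vnorm x * vnorm x).
    have : s <= dlt * vnorm x by [].
    move=> h; nra.
  have hs3 : s * s <= mL / (16 * Kc) * y2.
    have hdd : dlt * dlt <= dlt / 4 by nra.
    have h1 : s * s <= dlt * dlt * (2 * (s * s) + (2 * INR nI + 1) * y2).
      apply: Rle_trans hs2 _; apply: Rmult_le_compat_l; [nra | lra].
    have h2 : s * s <= 2 * (dlt * dlt) * ((2 * INR nI + 1) * y2).
      have : dlt * dlt <= 1/16 by nra.
      have : 0 <= (2 * INR nI + 1) * y2 by nra.
      nra.
    have h3 : 2 * (dlt * dlt) * ((2 * INR nI + 1) * y2) <= dlt / 2 * ((2 * INR nI + 1) * y2).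
      apply: Rmult_le_compat_r; nra.
    have h4 : dlt / 2 * ((2 * INR nI + 1) * y2) <= mL / (16 * Kc) * y2.
      have e : mL / (16 * Kc) * y2 = (mL / (8 * Kc * (2 * INR nI + 1))) / 2 * ((2 * INR nI + 1) * y2) by field; lra.
      rewrite e. apply: Rmult_le_compat_r; first nra.
      have : dlt <= mL / (8 * Kc * (2 * INR nI + 1)) by apply: Rmin_r.
      lra.
    lra.
  have hKs : (INR nI * (18 * (M * M) / mL + M) + 1/2) * (s * s) <= mL / 16 * y2.
    have hss : 0 <= s * s by apply: Rle_0_sqr.
    have : (INR nI * (18 * (M * M) / mL + M) + 1/2) * (s * s) <= Kc * (s * s).
      apply: Rmult_le_compat_r => //; rewrite /Kc; lra.
    have : Kc * (s * s) <= Kc * (mL / (16 * Kc) * y2) by apply: Rmult_le_compat_l; lra.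
    have -> : Kc * (mL / (16 * Kc) * y2) = mL / 16 * y2 by field; lra.
    lra.
  have hay : a * (s * s) <= y2.
    have : mL / (16 * Kc) <= 1.
      apply: (Rmult_le_reg_r (16 * Kc)); first lra.
      have -> : mL / (16 * Kc) * (16 * Kc) = mL by field; lra.
      lra.
    have hss : 0 <= s * s by apply: Rle_0_sqr.
    nra.
  have eK : INR nI * ((18 * (M * M) / mL + M) * (s * s) + 2 * (M * M) / mL) =
            INR nI * (18 * (M * M) / mL + M) * (s * s) + 2 * INR nI * (M * M) / mL by field; lra.
  rewrite eK in hK.
  rewrite /Cc.
  have : 0 <= a * (INR nI * INR nI) * (M * M) / mL.
    apply: Rdiv_le_0_compat'; [|lra]. apply: Rmult_le_pos; nra.
  have hmy : 0 <= mL * y2 by apply: Rmult_le_pos; lra.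
  have hmy2 : mL * (a * (s * s)) <= mL * y2 by apply: Rmult_le_compat_l; lra.
  set SE := sumR (fun i => zc i0 x i * drift edge mu gam ell x uc us i - a * s * W i) in hsumE *.
  set SK := sumR (fun _ : 'I_nI => (18 * (M * M) / mL + M) * (s * s) + 2 * (M * M) / mL) in hsumE hK *.
  clearbody SE SK.
  have t1 : SE <= - (3 * mL / 4) * y2 + INR nI * (18 * (M * M) / mL + M) * (s * s) + 2 * INR nI * (M * M) / mL by lra.
  set A := INR nI * (18 * (M * M) / mL + M) in t1 hKs.
  clearbody A.
  have t2 : SE + a * s * sumR ell <= - (3 * mL / 4) * y2 + (A + 1/2) * (s * s) + INR nI * INR nI * (M * M) / 2 + 2 * INR nI * (M * M) / mL by lra.
  have t3 : SE + a * s * sumR ell <= - (11 * mL / 16) * y2 + INR nI * INR nI * (M * M) / 2 + 2 * INR nI * (M * M) / mL by lra.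
  move=> hp.
  have : 0 <= 2 * INR nI * (M * M) / mL by apply: Rdiv_le_0_compat'; nra.
  lra.
Qed.
End Lyap.

Lemma chain_poly (phi : R -> R) r l c1 c2 :
  derivable_pt_lim phi r l ->
  derivable_pt_lim (fun t => phi (r + c1 * t + c2 * (t * t))) 0 (l * c1).
Proof.
move=> h.
have hw : derivable_pt_lim (fun t => r + c1 * t + c2 * (t * t)) 0 c1.
  eapply dval.
    apply: dplus; first apply: dplus.
    - exact: dconst.
    - apply: (dmult (fun _ => c1) (fun t => t)); [exact: dconst | exact: did].
    - apply: (dmult (fun _ => c2) (fun t => t * t)); first exact: dconst.
      apply: dmult; exact: did.
  cbv beta; ring.
have e : r + c1 * 0 + c2 * (0 * 0) = r by ring.
have := dcomp phi (fun t => r + c1 * t + c2 * (t * t)) 0 c1 l hw.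
rewrite e => H; exact: H h.
Qed.

Section VDef.
Variables (n : nat) (a : R) (i0 : 'I_n) (c0 p T0 : R).
Hypothesis hc0 : 0 < c0.

Definition RP0 r := Rpower (Hf c0 r) p.
Definition RP1 r := Rpower (Hf c0 r) (p - 1).
Definition RP2 r := Rpower (Hf c0 r) (p - 2).

Definition Vf (x : vec n) := T0 * RP0 (qb a i0 x).
Definition DVf (i : 'I_n) (x : vec n) :=
  T0 * p * (RP1 (qb a i0 x) * H1f c0 (qb a i0 x)) * dq a i0 x i.
Definition D2Vf (i k : 'I_n) (x : vec n) :=
  T0 * p * ((((p - 1) * RP2 (qb a i0 x) * H1f c0 (qb a i0 x)) * H1f c0 (qb a i0 x) +
             RP1 (qb a i0 x) * H2f c0 (qb a i0 x)) * (dq a i0 x k * dq a i0 x i) +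
            RP1 (qb a i0 x) * H1f c0 (qb a i0 x) * ddq a i0 i k).

Lemma dR1H1 r : derivable_pt_lim (fun r => RP1 r * H1f c0 r) r
   (((p - 1) * RP2 r * H1f c0 r) * H1f c0 r + RP1 r * H2f c0 r).
Proof.
eapply dval.
  apply: dmult; [exact: dRpH | exact: dH1f].
rewrite /RP2 /RP1. have -> : p - 1 - 1 = p - 2 by ring. done.
Qed.

Lemma dV x i : derivable_pt_lim (fun t => Vf (shift x i t)) 0 (DVf i x).
Proof.
rewrite /Vf /DVf.
apply: (dext _ (fun t => T0 * RP0 (qb a i0 x + dq a i0 x i * t + (ddq a i0 i i / 2) * (t * t)))).
  by move=> t; rewrite qb_shift.
eapply dval.
  apply: (dmult (fun _ => T0)); first exact: dconst.
  apply: (chain_poly RP0); exact: dRpH.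
rewrite /RP1; ring.
Qed.

Lemma dDV x i k : derivable_pt_lim (fun t => DVf i (shift x k t)) 0 (D2Vf i k x).
Proof.
rewrite /DVf /D2Vf.
apply: (dext _ (fun t => T0 * p * ((fun r => RP1 r * H1f c0 r) (qb a i0 x + dq a i0 x k * t + (ddq a i0 k k / 2) * (t * t))) * (dq a i0 x i + ddq a i0 i k * t))).
  by move=> t; rewrite qb_shift dq_shift.
eapply dval.
  apply: dmult.
    apply: (dmult (fun _ => T0 * p)); first exact: dconst.
    apply: (chain_poly (fun r => RP1 r * H1f c0 r)); exact: dR1H1.
  eapply dval.
    apply: dplus; first exact: dconst.
    apply: (dmult (fun _ => ddq a i0 i k) (fun t => t)); [exact: dconst | exact: did].
  reflexivity.
rewrite /=. 
have e : qb a i0 x + dq a i0 x k * 0 + ddq a i0 k k / 2 * (0 * 0) = qb a i0 x by ring.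
rewrite e. ring.
Qed.
End VDef.

Section Cont.
Variables (n : nat) (a : R) (i0 : 'I_n) (c0 p T0 : R).
Hypothesis hc0 : 0 < c0.

Lemma cv_esum : continuous_vec (fun y : vec n => esum y).
Proof. rewrite /esum; apply: (cv_sum _ _ (fun i y => y i)) => i; exact: cv_coord. Qed.

Lemma cv_zc i : continuous_vec (fun y : vec n => zc i0 y i).
Proof. rewrite /zc; case: (i == i0); [exact: cv_const | exact: cv_coord]. Qed.

Lemma cv_qb : continuous_vec (fun y : vec n => qb a i0 y).
Proof.
rewrite /qb; apply: cv_plus.
- apply: cv_scal; apply: cv_mult; exact: cv_esum.
- apply: (cv_sum _ _ (fun i y => zc i0 y i * zc i0 y i)) => i; apply: cv_mult; exact: cv_zc.
Qed.

Lemma cv_dq i : continuous_vec (fun y : vec n => dq a i0 y i).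
Proof.
rewrite /dq; apply: cv_plus; [apply: cv_scal; exact: cv_esum | apply: cv_scal; exact: cv_zc].
Qed.

Lemma cv_fq (f : R -> R) (f' : R -> R) : (forall r, derivable_pt_lim f r (f' r)) ->
  continuous_vec (fun y : vec n => f (qb a i0 y)).
Proof.
move=> hf; apply: (cv_comp _ _ f cv_qb) => y; exact: (der_rcont _ _ _ (hf _)).
Qed.

Lemma cv_R0 : continuous_vec (fun y : vec n => RP0 c0 p (qb a i0 y)).
Proof. apply: (cv_fq _ (fun r => p * Rpower (Hf c0 r) (p - 1) * H1f c0 r)) => r; exact: dRpH. Qed.
Lemma cv_R1 : continuous_vec (fun y : vec n => RP1 c0 p (qb a i0 y)).
Proof. apply: (cv_fq _ (fun r => (p - 1) * Rpower (Hf c0 r) (p - 1 - 1) * H1f c0 r)) => r; exact: dRpH. Qed.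
Lemma cv_R2 : continuous_vec (fun y : vec n => RP2 c0 p (qb a i0 y)).
Proof. apply: (cv_fq _ (fun r => (p - 2) * Rpower (Hf c0 r) (p - 2 - 1) * H1f c0 r)) => r; exact: dRpH. Qed.
Lemma cv_H1 : continuous_vec (fun y : vec n => H1f c0 (qb a i0 y)).
Proof. apply: (cv_fq _ (H2f c0)) => r; exact: dH1f. Qed.
Lemma cv_H2 : continuous_vec (fun y : vec n => H2f c0 (qb a i0 y)).
Proof.
have -> : (fun y : vec n => H2f c0 (qb a i0 y)) = (fun y => (2 / (c0 * c0)) * pospart (c0 + -1 * qb a i0 y)).
  apply: functional_extensionality => y; rewrite /H2f.
  have -> : c0 + -1 * qb a i0 y = c0 - qb a i0 y by ring.
  field; lra.
apply: cv_scal; apply: (cv_comp _ _ pospart); last by move=> y; exact: rcont_pp.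
apply: cv_plus; [exact: cv_const | apply: cv_scal; exact: cv_qb].
Qed.

Lemma cv_V : continuous_vec (Vf n a i0 c0 p T0).
Proof. rewrite /Vf; apply: cv_scal; exact: cv_R0. Qed.

Lemma cv_DV i : continuous_vec (DVf n a i0 c0 p T0 i).
Proof.
rewrite /DVf; apply: cv_mult; last exact: cv_dq.
apply: cv_scal; apply: cv_mult; [exact: cv_R1 | exact: cv_H1].
Qed.

Lemma cv_D2V i k : continuous_vec (D2Vf n a i0 c0 p T0 i k).
Proof.
rewrite /D2Vf; apply: cv_scal; apply: cv_plus.
- apply: cv_mult; last by apply: cv_mult; exact: cv_dq.
  apply: cv_plus.
  + apply: cv_mult; last exact: cv_H1.
    apply: cv_mult; last exact: cv_H1.
    apply: cv_scal; exact: cv_R2.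
  + apply: cv_mult; [exact: cv_R1 | exact: cv_H2].
- apply: cv_mult; last exact: cv_const.
  apply: cv_mult; [exact: cv_R1 | exact: cv_H1].
Qed.
End Cont.

Lemma Rpower_pos' x y : 0 < Rpower x y.
Proof. rewrite /Rpower; exact: exp_pos. Qed.

Lemma sumR_empty n (f : 'I_n -> R) : n = 0%nat -> sumR f = 0.
Proof. move=> e; subst n; exact: sumR_0. Qed.

Lemma Rpower_split h q : 0 < h -> Rpower h q = Rpower h (q - 1) * h.
Proof.
move=> hh; rewrite -{3}(Rpower_1 h hh) -Rpower_plus. f_equal; ring.
Qed.

Lemma final_est T0 p K9 k2 c0 P0 P1 h G Rn :
  0 < T0 -> 0 < p -> 0 <= K9 -> 0 < k2 -> 0 < c0 -> c0 / 3 <= h -> 0 < P1 ->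
  P0 = P1 * h ->
  G <= T0 * p * P1 * (K9 - 2 * k2 * h) ->
  Rn <= T0 * p * k2 * P0 ->
  (h <= K9 / k2 + c0 -> P0 <= Rpower (K9 / k2 + c0) p) ->
  G + Rn <= T0 * p * K9 * (3 * Rpower (K9 / k2 + c0) p / c0) + 1.
Proof.
move=> hT hp hK hk hc hh hP1 e0 hG hRn hmon.
have hhpos : 0 < h by lra.
have hTp : 0 < T0 * p by nra.
have hTpP : 0 < T0 * p * P1 by nra.
have hX : G + Rn <= T0 * p * P1 * (K9 - k2 * h).
  rewrite e0 in hRn.
  have : T0 * p * P1 * (K9 - 2 * k2 * h) + T0 * p * k2 * (P1 * h) = T0 * p * P1 * (K9 - k2 * h) by ring.
  lra.
have hRP := Rpower_pos' (K9 / k2 + c0) p.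
have hR0 : 0 <= T0 * p * K9 * (3 * Rpower (K9 / k2 + c0) p / c0).
  apply: Rmult_le_pos; first nra.
  apply: Rdiv_le_0_compat'; lra.
case: (Rle_lt_dec (K9 / k2) h) => hc2.
- have : K9 - k2 * h <= 0.
    have : K9 <= k2 * h.
      have := Rmult_le_compat_l _ _ _ (Rlt_le _ _ hk) hc2.
      have -> : k2 * (K9 / k2) = K9 by field; lra.
      done.
    lra.
  move=> hneg.
  have : T0 * p * P1 * (K9 - k2 * h) <= 0.
    have := Rmult_le_compat_l _ _ _ (Rlt_le _ _ hTpP) hneg. lra.
  lra.
- have hle : h <= K9 / k2 + c0 by lra.
  have hP0 := hmon hle.
  have hP1b : P1 <= 3 * Rpower (K9 / k2 + c0) p / c0.
    have : P1 * h <= Rpower (K9 / k2 + c0) p by lra.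
    move=> h1.
    have h2 : P1 * (c0 / 3) <= P1 * h by apply: Rmult_le_compat_l; lra.
    apply: (Rmult_le_reg_r (c0 / 3)); first lra.
    have -> : 3 * Rpower (K9 / k2 + c0) p / c0 * (c0 / 3) = Rpower (K9 / k2 + c0) p by field; lra.
    lra.
  have h3 : T0 * p * P1 * (K9 - k2 * h) <= T0 * p * P1 * K9.
    apply: Rmult_le_compat_l; nra.
  have h4 : T0 * p * P1 * K9 <= T0 * p * (3 * Rpower (K9 / k2 + c0) p / c0) * K9.
    apply: Rmult_le_compat_r => //; apply: Rmult_le_compat_l; lra.
  have e : T0 * p * (3 * Rpower (K9 / k2 + c0) p / c0) * K9 = T0 * p * K9 * (3 * Rpower (K9 / k2 + c0) p / c0) by ring.
  lra.
Qed.

Lemma mu_lb nI nJ (edge : 'I_nI -> 'I_nJ -> bool) (mu : mat nI nJ) :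
  (forall i j, edge i j = true -> 0 < mu i j) ->
  exists mL, 0 < mL /\ forall i j, edge i j -> mL <= mu i j.
Proof.
move=> hpos.
set S := sumR (fun i => sumR (fun j => if edge i j then / mu i j else 0)) + 1.
have hnn : forall i j, 0 <= (if edge i j then / mu i j else 0).
  move=> i j; case e: (edge i j); last lra.
  apply: Rlt_le; apply: Rinv_0_lt_compat; exact: hpos.
have hS0 : 0 <= sumR (fun i => sumR (fun j => if edge i j then / mu i j else 0)).
  apply: sumR_nonneg => i; apply: sumR_nonneg => j; exact: hnn.
exists (/ S); split; first by apply: Rinv_0_lt_compat; rewrite /S; lra.
move=> i j he.
have h1 : (if edge i j then / mu i j else 0) <= sumR (fun j => if edge i j then / mu i j else 0).
  exact: (sumR_ge_single _ (fun j => if edge i j then / mu i j else 0) j (hnn i)).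
have h2 : sumR (fun j => if edge i j then / mu i j else 0) <= sumR (fun i => sumR (fun j => if edge i j then / mu i j else 0)).
  apply: (sumR_ge_single _ (fun i => sumR (fun j => if edge i j then / mu i j else 0)) i).
  move=> k; apply: sumR_nonneg => l; exact: hnn.
rewrite he in h1.
have hm := hpos i j he.
have hinv : / mu i j <= S by rewrite /S; lra.
have hS : 0 < S by rewrite /S; lra.
rewrite -(Rinv_inv (mu i j)).
apply: Rinv_le_contravar => //; apply: Rinv_0_lt_compat => //.
Qed.

Lemma sum2_ge nI nJ (f : 'I_nI -> 'I_nJ -> R) i j : (forall i j, 0 <= f i j) ->
  f i j <= sumR (fun i => sumR (fun j => f i j)).
Proof.
move=> h.
apply: Rle_trans (sumR_ge_single _ (fun j => f i j) j (h i)) _.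
apply: (sumR_ge_single _ (fun i => sumR (fun j => f i j)) i).
move=> k; apply: sumR_nonneg => l; exact: h.
Qed.

Theorem corollary4p2 (nI nJ : nat) (edge : 'I_nI -> 'I_nJ -> bool)
  (lam gam ell : 'I_nI -> R) (mu : 'I_nI -> 'I_nJ -> R)
  (Htree : bipartite_tree edge)
  (Hlam : forall i, 0 < lam i) (Hgam : forall i, 0 <= gam i)
  (Hmu_e : forall i j, edge i j = true -> 0 < mu i j)
  (Hmu_n : forall i j, edge i j = false -> mu i j = 0)
  (Hone : forall i1 i2 : 'I_nI,
      (1 < deg edge i1)%nat -> (1 < deg edge i2)%nat -> i1 = i2)
  (m : R) (Hm : 1 <= m) :
  exists (delta kappa : R) (Q : 'I_nI -> 'I_nI -> R)
         (V : vec nI -> R) (DV : 'I_nI -> vec nI -> R)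
         (D2V : 'I_nI -> 'I_nI -> vec nI -> R),
    0 < delta /\ 0 < kappa /\ pos_def Q /\
    is_C2 V DV D2V /\
    (forall x : vec nI, 1 <= vnorm x -> V x = rpow (qform Q x) (m / 2)) /\
    (forall (x : vec nI) (uc : vec nI) (us : vec nJ),
        ~ (esum x > delta * vnorm x) -> in_U uc us ->
        gen edge lam gam ell mu DV D2V uc us x <= kappa - rpow (vnorm x) m).
Proof.
case: (Nat.eq_dec nI 0) => hnI.
-
  subst nI.
  exists 1, 1, (fun _ _ => 0), (fun _ => 0), (fun _ _ => 0), (fun _ _ _ => 0).
  split; first lra. split; first lra.
  split.
    split => //. move=> x [[i hi]] //.
  split.
    split; first by move=> i x; exact: dconst.
    split; first by move=> i k x; exact: dconst.
    split; first exact: cv_const.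
    split; move=> *; exact: cv_const.
  split.
    move=> x _; rewrite /rpow /qform sumR_0; case: Rle_dec => // h; exfalso; apply: h; lra.
  move=> x uc us _ [_ [_ [h _]]].
  by rewrite /esum sumR_0 in h; lra.
have hnI0 : (0 < nI)%nat by apply/ltP; lia.
have [i0 Hdeg] : exists i0 : 'I_nI, forall i, i != i0 -> (deg edge i <= 1)%nat.
  case: (classic (exists i, (1 < deg edge i)%nat)) => [[i1 hi1]|hno].
  - exists i1 => i hi; rewrite leqNgt; apply/negP => h.
    by move: hi; rewrite (Hone _ _ h hi1) eqxx.
  - exists (Ordinal hnI0) => i _; rewrite leqNgt; apply/negP => h; apply: hno; by exists i.
have hn : 1 <= INR nI.
  have : (1 <= nI)%coq_nat by apply/leP.
  move=> h; have := le_INR _ _ h; simpl; lra.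
have [mL [hmL HmuL]] := mu_lb _ _ edge mu Hmu_e.
have hmu0 : forall i j, 0 <= mu i j.
  move=> i j; case e: (edge i j); [apply: Rlt_le; exact: Hmu_e | rewrite Hmu_n //; lra].
set M := sumR (fun i => sumR (fun j => mu i j)) + sumR gam + sumR (fun i => Rabs (ell i)) + mL.
have hSmu : 0 <= sumR (fun i => sumR (fun j => mu i j)) by apply: sumR_nonneg => i; apply: sumR_nonneg => j.
have hSg : 0 <= sumR gam by apply: sumR_nonneg.
have hSl : 0 <= sumR (fun i => Rabs (ell i)) by apply: sumR_nonneg => i; apply: Rabs_pos.
have HmuU : forall i j, 0 <= mu i j <= M.
  move=> i j; split => //; have := sum2_ge _ _ mu i j hmu0; rewrite /M; lra.
have Hg : forall i, 0 <= gam i <= M.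
  move=> i; split => //; have := sumR_ge_single _ gam i Hgam; rewrite /M; lra.
have Hl : forall i, Rabs (ell i) <= M.
  move=> i; have := sumR_ge_single _ (fun i => Rabs (ell i)) i (fun i => Rabs_pos _); rewrite /M; lra.
have HmM : mL <= M by rewrite /M; lra.
have hM0 : 0 < M by lra.
set a := Rmin 1 (mL * mL / (4 * INR nI * (M * M))).
have ha0 : 0 < a.
  rewrite /a; apply: Rmin_pos; first lra.
  apply: Rdiv_lt_0_compat; nra.
have ha1 : a <= 1 by apply: Rmin_l.
have Hac : a * (4 * INR nI * (M * M)) <= mL * mL.
  have h : a <= mL * mL / (4 * INR nI * (M * M)) by apply: Rmin_r.
  have hp : 0 < 4 * INR nI * (M * M) by nra.
  have := Rmult_le_compat_r _ _ _ (Rlt_le _ _ hp) h.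
  have -> : mL * mL / (4 * INR nI * (M * M)) * (4 * INR nI * (M * M)) = mL * mL by field; lra.
  done.
set del := dlt nI mL M.
have hKc : mL <= Kc nI mL M.
  rewrite /Kc.
  have : 0 <= INR nI * (18 * (M * M) / mL + M).
    apply: Rmult_le_pos; first lra.
    have : 0 <= 18 * (M * M) / mL by apply: Rdiv_le_0_compat'; nra. lra.
  lra.
have hdel : 0 < del.
  rewrite /del /dlt; apply: Rmin_pos; first lra.
  apply: Rdiv_lt_0_compat => //; nra.
set C := Cc nI mL M a.
have hC : 0 <= C.
  rewrite /C /Cc.
  have : 0 <= a * (INR nI * INR nI) * (M * M) / mL by apply: Rdiv_le_0_compat'; [apply: Rmult_le_pos; nra | lra].
  have : 0 <= 2 * INR nI * (M * M) / mL by apply: Rdiv_le_0_compat'; nra.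
  have : 0 <= INR nI * INR nI * (M * M) / 2 by apply: Rdiv_le_0_compat'; nra.
  lra.
set k2 := mL / 4.
have hk2 : 0 < k2 by rewrite /k2; lra.
set K0 := 2 / a + 2 * INR nI + 1.
have hK0 : 0 < K0.
  rewrite /K0; have : 0 < 2 / a by apply: Rdiv_lt_0_compat; lra. lra.
set c0 := / K0.
have hc0 : 0 < c0 by apply: Rinv_0_lt_compat.
have hqbl : forall x : vec nI, c0 * sumR (fun i => x i * x i) <= qb a i0 x.
  move=> x; have h := qb_lower a i0 x ha0; rewrite -/K0 in h.
  apply: (Rmult_le_reg_l K0) => //. rewrite -Rmult_assoc /c0 Rinv_r; lra.
set Lam := sumR lam.
have hLam : 0 <= Lam by apply: sumR_nonneg => i; apply: Rlt_le.
set p := m / 2.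
have hp : 0 < p by rewrite /p; lra.
set K9 := Rabs (p - 1) * (8 * Lam) + 2 * (8 * Lam) + 4 * Lam + 2 * C + 2 * k2 * c0.
have hK9 : 0 <= K9.
  rewrite /K9; have := Rabs_pos (p - 1); have : 0 <= k2 * c0 by nra. nra.
set T0 := / (k2 * p * Rpower c0 p).
have hRc := Rpower_pos' c0 p.
have hT0 : 0 < T0 by rewrite /T0; apply: Rinv_0_lt_compat; apply: Rmult_lt_0_compat => //; apply: Rmult_lt_0_compat.
have hT0e : T0 * p * k2 * Rpower c0 p = 1 by rewrite /T0; field; repeat split; lra.
set t := Rpower T0 (/ p).
have ht : 0 < t := Rpower_pos' _ _.
have htp : Rpower t p = T0.
  rewrite /t Rpower_mult. have -> : / p * p = 1 by field; lra. exact: Rpower_1.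
exists del, (T0 * p * K9 * (3 * Rpower (K9 / k2 + c0) p / c0) + 1),
  (fun i k => t * Qb a i0 i k), (Vf nI a i0 c0 p T0), (DVf nI a i0 c0 p T0), (D2Vf nI a i0 c0 p T0).
split => //.
split.
  have : 0 <= T0 * p * K9 * (3 * Rpower (K9 / k2 + c0) p / c0).
    apply: Rmult_le_pos; first by apply: Rmult_le_pos; [apply: Rmult_le_pos|]; lra.
    apply: Rdiv_le_0_compat' => //; have := Rpower_pos' (K9 / k2 + c0) p; lra.
  lra.
split.
  split.
    move=> i k; rewrite /Qb eq_sym.
    case: (eqVneq k i) => [->|] //=; by rewrite andbF.
  move=> x [i hi].
  rewrite qform_Qb.
  have hsq : 0 < sumR (fun i => x i * x i).
    apply: Rlt_le_trans (sumR_ge_single _ (fun i => x i * x i) i (fun k => Rle_0_sqr _)).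
    have := Rle_0_sqr (x i); rewrite /Rsqr => h0.
    case: (Rle_lt_or_eq_dec _ _ h0) => // e; exfalso; apply: hi; nra.
  have := hqbl x. have : 0 < c0 * sumR (fun i => x i * x i) by nra. nra.
split.
  split; first by move=> i x; exact: dV.
  split; first by move=> i k x; exact: dDV.
  split; first exact: cv_V.
  split; first by move=> i; exact: cv_DV.
  by move=> i k; exact: cv_D2V.
split.
  move=> x hN.
  have hN2 : 1 <= sumR (fun i => x i * x i).
    have hs0 : 0 <= sumR (fun i => x i * x i) by apply: sumR_nonneg => i; apply: Rle_0_sqr.
    have := sqrt_sqrt _ hs0; rewrite -/(vnorm x) => e. nra.
  have hr := hqbl x.
  have hrc : c0 <= qb a i0 x by nra.
  rewrite qform_Qb /rpow /Vf /RP0 Hf_big //.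
  case: Rle_dec => h; first by exfalso; nra.
  rewrite -Rpower_mult_distr //; [rewrite htp // | lra].
move=> x uc us hreg hU.
have hreg' : esum x <= del * vnorm x by apply: Rnot_lt_le.
have hnJ : nJ <> 0%nat.
  move=> e; case: hU => [_ [_ [_ h]]]; rewrite /esum sumR_empty // in h; lra.
have hnJ0 : (0 < nJ)%nat by apply/ltP; lia.
set j1 := (Ordinal hnJ0 : 'I_nJ).
have Hhub := hub_all _ _ edge (proj1 Htree) i0 Hdeg.
have Hsing := fun i hi => single_edge _ _ edge (proj1 Htree) i0 Hdeg i j1 hi.
have hF := Lyap_main _ _ edge i0 mu gam ell mL M a Hhub Hsing Hmu_n hmL HmuL HmuU Hg Hl HmM (conj ha0 ha1) hn Hac x uc us hU hreg'.
rewrite -/C -/del in hF.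
set r := qb a i0 x.
set h := Hf c0 r. set h1 := H1f c0 r. set h2 := H2f c0 r.
set P0 := RP0 c0 p r. set P1 := RP1 c0 p r. set P2 := RP2 c0 p r.
set S := sumR (fun i => lam i * (dq a i0 x i * dq a i0 x i)).
set D := sumR (fun i => lam i * ddq a i0 i i).
set F2 := sumR (fun i => drift edge mu gam ell x uc us i * dq a i0 x i).
have hr0 : 0 <= r by apply: qb_ge0; lra.
have hh3 : c0 / 3 <= h by apply: Hf_ge.
have hhr : r <= h by apply: Hf_ge_r.
have hhc : h <= c0 + h1 * r by apply: Hf_le.
have [h10 h11] : 0 <= h1 <= 1 by apply: H1f_bnd.
have [h20 h2r] : 0 <= h2 /\ h2 * r <= 2 by apply: H2f_bnd.
have hhpos : 0 < h by lra.
have hP1 : 0 < P1 by apply: Rpower_pos'.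
have eP0 : P0 = P1 * h by rewrite /P0 /P1 /RP0 /RP1; apply: Rpower_split.
have eP2 : P2 = P1 / h.
  rewrite /P2 /P1 /RP2 /RP1 (Rpower_split _ (p - 1)) // /Rdiv.
  have -> : p - 1 - 1 = p - 2 by ring. rewrite /h. field. rewrite -/h; lra.
have eg : gen edge lam gam ell mu (DVf nI a i0 c0 p T0) (D2Vf nI a i0 c0 p T0) uc us x =
   T0 * p * (((p - 1) * P2 * h1) * h1 + P1 * h2) * S + T0 * p * (P1 * h1) * D + T0 * p * (P1 * h1) * F2.
  rewrite /gen.
  have -> : sumR (fun i => lam i * D2Vf nI a i0 c0 p T0 i i x) =
     T0 * p * (((p - 1) * P2 * h1) * h1 + P1 * h2) * S + T0 * p * (P1 * h1) * D.
    rewrite /S /D -sumR_scal -sumR_scal -sumR_plus; apply: sumR_ext => i.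
    rewrite /D2Vf -/r -/h1 -/h2 -/P1 -/P2; ring.
  have -> : sumR (fun i => drift edge mu gam ell x uc us i * DVf nI a i0 c0 p T0 i x) =
     T0 * p * (P1 * h1) * F2.
    rewrite /F2 -sumR_scal; apply: sumR_ext => i.
    rewrite /DVf -/r -/h1 -/P1; ring.
  ring.
have eF2 : F2 = 2 * (a * esum x * sumR (fun i => drift edge mu gam ell x uc us i) +
             sumR (fun i => zc i0 x i * drift edge mu gam ell x uc us i)).
  rewrite /F2 -sumR_scal -sumR_plus -sumR_scal; apply: sumR_ext => i.
  rewrite /dq; ring.
have hF2 : F2 <= 2 * C - 2 * k2 * r.
  rewrite eF2 /k2; rewrite -/r in hF; lra.
have hy : forall i, zc i0 x i * zc i0 x i <= sumR (fun i => zc i0 x i * zc i0 x i).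
  move=> i; apply: (sumR_ge_single _ (fun i => zc i0 x i * zc i0 x i) i) => k; apply: Rle_0_sqr.
have hSb : S <= 8 * Lam * r.
  have : S <= sumR (fun i => lam i * (8 * r)).
    apply: sumR_le => i; apply: Rmult_le_compat_l; first by apply: Rlt_le.
    rewrite /r /qb /dq.
    have hzi := hy i.
    set s := esum x in hzi *. set z := zc i0 x i in hzi *.
    set Y := sumR (fun i => zc i0 x i * zc i0 x i) in hzi *.
    have hss : 0 <= s * s by apply: Rle_0_sqr.
    have h1' : a * a * (s * s) <= a * (s * s).
      have : a * (a * (s * s)) <= 1 * (a * (s * s)) by apply: Rmult_le_compat_r; [nra | lra].
      lra.
    have := Rle_0_sqr (2 * a * s - 2 * z); rewrite /Rsqr => h3.
    nra.
  have -> : sumR (fun i => lam i * (8 * r)) = 8 * Lam * r.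
    have -> : 8 * Lam * r = (8 * r) * Lam by ring.
    rewrite /Lam -sumR_scal; apply: sumR_ext => i; ring.
  done.
have hS0 : 0 <= S.
  apply: sumR_nonneg => i; apply: Rmult_le_pos; [apply: Rlt_le; exact: Hlam | apply: Rle_0_sqr].
have hDb : D <= 4 * Lam.
  have : D <= sumR (fun i => lam i * 4).
    apply: sumR_le => i; apply: Rmult_le_compat_l; first by apply: Rlt_le.
    rewrite /ddq; case: (_ && _); lra.
  have -> : sumR (fun i => lam i * 4) = 4 * Lam.
    rewrite /Lam -sumR_scal; apply: sumR_ext => i; ring.
  done.
have hB : ((p - 1) * (h1 * h1) / h + h2) * S + h1 * (D + F2) <= K9 - 2 * k2 * h.
  have hSh : S / h <= 8 * Lam.
    apply: (Rmult_le_reg_r h) => //.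
    have -> : S / h * h = S by field; lra.
    have : 8 * Lam * r <= 8 * Lam * h by apply: Rmult_le_compat_l; lra.
    lra.
  have hSh0 : 0 <= S / h by apply: Rdiv_le_0_compat'.
  have t1 : (p - 1) * (h1 * h1) / h * S <= Rabs (p - 1) * (8 * Lam).
    have e : (p - 1) * (h1 * h1) / h * S = (p - 1) * ((h1 * h1) * (S / h)) by field; lra.
    rewrite e.
    apply: Rle_trans (Rle_abs _) _.
    rewrite Rabs_mult. apply: Rmult_le_compat_l; first exact: Rabs_pos.
    rewrite Rabs_right; last by apply: Rle_ge; apply: Rmult_le_pos => //; apply: Rle_0_sqr.
    have : h1 * h1 <= 1 by nra.
    move=> hh1.
    have : h1 * h1 * (S / h) <= 1 * (S / h) by apply: Rmult_le_compat_r.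
    lra.
  have t2 : h2 * S <= 2 * (8 * Lam).
    have : h2 * S <= h2 * (8 * Lam * r) by apply: Rmult_le_compat_l.
    have : h2 * (8 * Lam * r) = (8 * Lam) * (h2 * r) by ring.
    have : (8 * Lam) * (h2 * r) <= (8 * Lam) * 2 by apply: Rmult_le_compat_l; lra.
    lra.
  have t3 : h1 * (D + F2) <= 4 * Lam + 2 * C + 2 * k2 * c0 - 2 * k2 * h.
    have : h1 * (D + F2) <= h1 * (4 * Lam + 2 * C - 2 * k2 * r) by apply: Rmult_le_compat_l; lra.
    have : h1 * (4 * Lam + 2 * C) <= 4 * Lam + 2 * C.
      have : 0 <= 4 * Lam + 2 * C by lra.
      nra.
    have : k2 * h <= k2 * (c0 + h1 * r) by apply: Rmult_le_compat_l; lra.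
    lra.
  rewrite /K9.
  have e : ((p - 1) * (h1 * h1) / h + h2) * S + h1 * (D + F2) = (p - 1) * (h1 * h1) / h * S + h2 * S + h1 * (D + F2) by ring.
  rewrite e; lra.
have hG : gen edge lam gam ell mu (DVf nI a i0 c0 p T0) (D2Vf nI a i0 c0 p T0) uc us x <=
          T0 * p * P1 * (K9 - 2 * k2 * h).
  rewrite eg eP2.
  have e : T0 * p * ((p - 1) * (P1 / h) * h1 * h1 + P1 * h2) * S + T0 * p * (P1 * h1) * D + T0 * p * (P1 * h1) * F2
         = T0 * p * P1 * (((p - 1) * (h1 * h1) / h + h2) * S + h1 * (D + F2)) by field; lra.
  rewrite e. apply: Rmult_le_compat_l => //. apply: Rmult_le_pos; [apply: Rmult_le_pos|]; lra.
have hRn : rpow (vnorm x) m <= T0 * p * k2 * P0.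
  have hs0 : 0 <= sumR (fun i => x i * x i) by apply: sumR_nonneg => i; apply: Rle_0_sqr.
  have hTP : 0 <= T0 * p * k2 * P0.
    rewrite eP0; apply: Rmult_le_pos; [apply: Rmult_le_pos; [apply: Rmult_le_pos|]|apply: Rmult_le_pos]; lra.
  rewrite /rpow; case: Rle_dec => hN //.
  have hN0 : 0 < vnorm x by lra.
  have eN : vnorm x * vnorm x = sumR (fun i => x i * x i) by rewrite /vnorm sqrt_sqrt.
  have hsp : 0 < sumR (fun i => x i * x i) by rewrite -eN; nra.
  have e1 : Rpower (vnorm x) m = Rpower (sumR (fun i => x i * x i)) p.
    rewrite -eN.
    have -> : vnorm x * vnorm x = Rpower (vnorm x) 2.
      have -> : (2 : R) = INR 2 by simpl; ring.
      rewrite Rpower_pow //; simpl; ring.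
    rewrite Rpower_mult /p; f_equal; field.
  rewrite e1.
  have hle : sumR (fun i => x i * x i) <= h / c0.
    have := hqbl x; rewrite -/r => h0.
    apply: (Rmult_le_reg_l c0) => //.
    have -> : c0 * (h / c0) = h by field; lra.
    lra.
  have := Rle_Rpower_l _ _ p (Rlt_le _ _ hp) (conj hsp hle).
  have e2 : Rpower (h / c0) p = T0 * p * k2 * P0.
    have := Rpower_mult_distr (h / c0) c0 p ltac:(apply: Rdiv_lt_0_compat; lra) hc0.
    have -> : h / c0 * c0 = h by field; lra.
    rewrite -/(RP0 c0 p r) -/P0 => e3.
    rewrite -e3. rewrite -[in RHS]Rmult_assoc.
    have -> : T0 * p * k2 * Rpower (h / c0) p * Rpower c0 p = Rpower (h / c0) p * (T0 * p * k2 * Rpower c0 p) by ring.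
    rewrite hT0e; ring.
  move=> hA /=; lra.
have hmon : h <= K9 / k2 + c0 -> P0 <= Rpower (K9 / k2 + c0) p.
  move=> hle; rewrite /P0 /RP0 -/h.
  apply: Rle_Rpower_l; lra.
have := final_est T0 p K9 k2 c0 P0 P1 h _ _ hT0 hp hK9 hk2 hc0 hh3 hP1 eP0 hG hRn hmon.
lra.
Qed.
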